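(* Assume $a^2\rho(\mathbf P_1\mathbf E)<1$ and $B\ge B_0:=\dfrac{\bar M\log(a^2)}{\log(c^2/\bar a^2)}$. Define $\mathcal Z_\theta(b):=b^\theta\,\mathbf d^T(\mathbf I-b\mathbf P_1\mathbf E)^{-1}$ (a row vector) and $$\mathbf Q(\theta):=\big[\mathcal Z_\theta(\bar a^2)-\mathcal Z_\theta(c^2)\big]\frac{B}{c^{2\theta}}+\bar M\big[\mathcal Z_\theta(a^2)-\mathcal Z_\theta(1)\big]\in\mathbb R^{1\times n}.$$ If $\mathbf Q(D)<\mathbf 0$ elementwise for some $D\in\mathbb N$, then $\mathcal J_{S_j}^\theta<0$ for every $\theta\in\{1,\dots,D\}$, every reception index $j$, every $x_{S_j}\in\mathbb R$ and every $\gamma_{S_j}\in\{1,\dots,n\}$.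
   Context: Setup. Fix reals $a,L$ with $|a|>1$ and $\bar a:=a+L$ satisfying $0<\bar a^2<1$; fix $c$ with $\bar a^2<c^2<1$, $M>0$, $B>0$, and $\bar M:=M/(a^2-1)$. Plant $x_{k+1}=ax_k+u_k+v_k$, $v_k$ i.i.d., mean $0$, variance $M$, independent of everything else. Sensor decisions $t_k\in\{0,1\}$, receptions $r_k\in\{0,1\}$ ($r_k=0$ if $t_k=0$). Controller $u_k=L\hat x_k^+$, $\hat x_k:=\bar a\hat x_{k-1}^+$, $\hat x_k^+:=x_k$ if $r_k=1$, else $\hat x_k$. Channel state $\gamma_k\in\{1,\dots,n\}$ with $\Pr[\gamma_{k+1}=i\mid\gamma_k=j,t_k=\ell]=(\mathbf P_\ell)_{ij}$, $\mathbf P_0,\mathbf P_1$ column-stochastic; drop probabilities $\mathbf e\in[0,1]^n$ (if $t_k=1$, $r_k=1$ w.p. $1-e_{\gamma_k}$); $\mathbf E:=\mathrm{diag}(\mathbf e)$, $\mathbf d:=\mathbf 1-\mathbf e$, $\mathbf P^0:=\mathbf I$, $\boldsymbol\delta_i$ standard basis vectors, $\rho$ spectral radius. $r_0=1$; $R_k:=\max\{i<k:r_i=1\}$; $S_0:=0$, $S_{j+1}:=\min\{k>S_j:r_k=1\}$. $I_k^+$ is the sensor's post-transmission information at time $k$, which at a reception time $S_j$ contains $x_{S_j}$, $z^+_{S_j}=0$, $S_j$ and $\gamma_{S_j}$. Performance function $h_k:=x_k^2-\max\{c^{2(k-R_k)}x_{R_k}^2,B\}$. Nominal policy $\mathcal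 T_k^D$: $t_i=0$ for $k\le i\le k+D-1$, $t_i=1$ for $i\ge k+D$. Performance-evaluation function: $\mathcal J_{S_j}^\theta:=\mathbb E_{\mathcal T^{\theta-1}_{S_j+1}}[h_{S_{j+1}}\mid I_{S_j}^+]=\sum_{w\ge\theta}H(w,x_{S_j}^2)\,\mathbf d^T(\mathbf P_1\mathbf E)^{w-\theta}\mathbf P_0^{\theta-1}\mathbf P_1\boldsymbol\delta_{\gamma_{S_j}}$, where $H(w,y):=\bar a^{2w}y+\bar M(a^{2w}-1)-\max\{c^{2w}y,B\}$. *)

(* Defs.v *)
From Stdlib Require Import Reals Lra Lia ClassicalEpsilon.
Open Scope R_scope.

(* Channel states are indexed 0..n-1 (paper: 1..n).
   Matrices are functions nat -> nat -> R, only entries < n matter;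
   row vectors are functions nat -> R. *)
Definition mat := nat -> nat -> R.

Fixpoint fsum (n : nat) (f : nat -> R) : R :=
  match n with O => 0 | S k => fsum k f + f k end.

Definition mid : mat := fun i j => if Nat.eqb i j then 1 else 0.
Definition mmul (n : nat) (A B : mat) : mat :=
  fun i j => fsum n (fun k => A i k * B k j).
Fixpoint mpow (n : nat) (A : mat) (k : nat) : mat :=
  match k with O => mid | S k' => mmul n A (mpow n A k') end.
Definition mdiag (e : nat -> R) : mat := fun i j => if Nat.eqb i j then e i else 0.
Definition msub (A B : mat) : mat := fun i j => A i j - B i j.
Definition mscale (b : R) (A : mat) : mat := fun i j => b * A i j.

Definition is_inverse (n : nat) (M N : mat) : Prop :=
  forall i j, (i < n)%nat -> (j < n)%nat ->
    mmul n M N i j = mid i j /\ mmul n N M i j = mid i j.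

(* The matrix inverse (chosen by classical choice; unique when it exists). *)
Definition mat_inv (n : nat) (M : mat) : mat :=
  epsilon (inhabits mid) (fun N => is_inverse n M N).

Definition col_stochastic (n : nat) (P : mat) : Prop :=
  (forall i j, (i < n)%nat -> (j < n)%nat -> 0 <= P i j) /\
  (forall j, (j < n)%nat -> fsum n (fun i => P i j) = 1).

(* (lr + i li) is a complex eigenvalue of the real n x n matrix A:
   there is a nonzero complex vector vr + i vi with A v = lambda v. *)
Definition is_eigval (n : nat) (A : mat) (lr li : R) : Prop :=
  exists vr vi : nat -> R,
    (exists i, (i < n)%nat /\ (vr i <> 0 \/ vi i <> 0)) /\
    forall i, (i < n)%nat ->
      fsum n (fun k => A i k * vr k) = lr * vr i - li * vi i /\
      fsum n (fun k => A i k * vi k) = lr * vi i + li * vr i.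

Definition spectral_radius (n : nat) (A : mat) : R :=
  epsilon (inhabits 0)
    (fun r => is_lub (fun m => exists lr li, is_eigval n A lr li /\
                                   m = sqrt (lr ^ 2 + li ^ 2)) r).

Definition Hfun (a abar c B Mbar : R) (w : nat) (y : R) : R :=
  abar ^ (2 * w) * y + Mbar * (a ^ (2 * w) - 1) - Rmax (c ^ (2 * w) * y) B.

Definition P1E (n : nat) (P1 : mat) (e : nat -> R) : mat := mmul n P1 (mdiag e).

(* w-th term of the performance-evaluation series:
   H(w,y) d^T (P1 E)^{w-theta} P0^{theta-1} P1 delta_gamma, with d = 1 - e. *)
Definition J_term (n : nat) (a abar c B Mbar : R) (P0 P1 : mat) (e : nat -> R)
    (theta : nat) (y : R) (gamma : nat) (w : nat) : R :=
  Hfun a abar c B Mbar w y *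
  fsum n (fun i => (1 - e i) *
    mmul n (mpow n (P1E n P1 e) (w - theta))
           (mmul n (mpow n P0 (theta - 1)) P1) i gamma).

Definition Zrow (n : nat) (P1 : mat) (e : nat -> R) (theta : nat) (b : R) : nat -> R :=
  fun i => b ^ theta *
    fsum n (fun k => (1 - e k) *
      mat_inv n (msub mid (mscale b (P1E n P1 e))) k i).

Definition Qrow (n : nat) (a abar c B Mbar : R) (P1 : mat) (e : nat -> R)
    (theta : nat) : nat -> R :=
  fun i => (Zrow n P1 e theta (abar ^ 2) i - Zrow n P1 e theta (c ^ 2) i)
             * B / c ^ (2 * theta)
           + Mbar * (Zrow n P1 e theta (a ^ 2) i - Zrow n P1 e theta 1 i).

(* Main.v *)
Require Import Defs.
From Stdlib Require Import Reals Lra Lia ClassicalEpsilon.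
From Stdlib Require Import Classical.
From Coquelicot Require Import Coquelicot.
Open Scope R_scope.

Lemma fsum_ext n f g : (forall k, (k < n)%nat -> f k = g k) -> fsum n f = fsum n g.
Proof. induction n; simpl; intros H; auto. rewrite IHn by (intros; apply H; lia). rewrite H by lia. auto. Qed.

Lemma fsum_plus n f g : fsum n (fun k => f k + g k) = fsum n f + fsum n g.
Proof. induction n; simpl; [lra|]. rewrite IHn. lra. Qed.

Lemma fsum_minus n f g : fsum n (fun k => f k - g k) = fsum n f - fsum n g.
Proof. induction n; simpl; [lra|]. rewrite IHn. lra. Qed.

Lemma fsum_scal n c f : fsum n (fun k => c * f k) = c * fsum n f.
Proof. induction n; simpl; [lra|]. rewrite IHn. lra. Qed.

Lemma fsum_scal_r n c f : fsum n (fun k => f k * c) = fsum n f * c.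
Proof. induction n; simpl; [lra|]. rewrite IHn. lra. Qed.

Lemma fsum_zero n : fsum n (fun _ => 0) = 0.
Proof. induction n; simpl; lra. Qed.

Lemma fsum_le n f g : (forall k, (k < n)%nat -> f k <= g k) -> fsum n f <= fsum n g.
Proof. induction n; simpl; intros H; [lra|]. assert (H1 := H n ltac:(lia)).
 assert (fsum n f <= fsum n g) by (apply IHn; intros; apply H; lia). lra. Qed.

Lemma fsum_nonneg n f : (forall k, (k < n)%nat -> 0 <= f k) -> 0 <= fsum n f.
Proof. intros H. rewrite <- (fsum_zero n). apply fsum_le. auto. Qed.

Lemma fsum_swap n m (f : nat -> nat -> R) :
  fsum n (fun i => fsum m (fun j => f i j)) = fsum m (fun j => fsum n (fun i => f i j)).
Proof. induction n; simpl. rewrite fsum_zero; auto. rewrite IHn, <- fsum_plus. auto. Qed.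

Lemma fsum_delta n i f : (i < n)%nat ->
  fsum n (fun k => (if Nat.eqb i k then 1 else 0) * f k) = f i.
Proof.
  induction n; intros Hi; [lia|]. simpl. destruct (Nat.eq_dec i n) as [->|Hne].
  - rewrite Nat.eqb_refl. rewrite (fsum_ext _ _ (fun _ => 0)). rewrite fsum_zero; lra.
    intros k Hk. destruct (Nat.eqb_spec n k); [lia|lra].
  - rewrite IHn by lia. destruct (Nat.eqb_spec i n); [lia|lra].
Qed.

Lemma fsum_delta_r n i f : (i < n)%nat ->
  fsum n (fun k => f k * (if Nat.eqb k i then 1 else 0)) = f i.
Proof.
  intros Hi. rewrite <- (fsum_delta n i f Hi). apply fsum_ext. intros k _.
  destruct (Nat.eqb_spec k i), (Nat.eqb_spec i k); try lia; lra.
Qed.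

Lemma mmul_assoc n A B C i j :
  mmul n (mmul n A B) C i j = mmul n A (mmul n B C) i j.
Proof.
  unfold mmul.
  rewrite (fsum_ext n (fun k => fsum n (fun l => A i l * B l k) * C k j)
             (fun k => fsum n (fun l => A i l * B l k * C k j))).
  2:{ intros k _. rewrite <- fsum_scal_r. auto. }
  rewrite fsum_swap. apply fsum_ext. intros l _. rewrite <- fsum_scal. apply fsum_ext.
  intros; ring.
Qed.

Lemma mmul_mid_l n A i j : (i < n)%nat -> mmul n mid A i j = A i j.
Proof. intros. unfold mmul, mid. apply (fsum_delta n i (fun k => A k j)); auto. Qed.

Lemma mmul_mid_r n A i j : (j < n)%nat -> mmul n A mid i j = A i j.
Proof. intros. unfold mmul, mid. apply (fsum_delta_r n j (fun k => A i k)); auto. Qed.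

Lemma mmul_ext n A A' B B' i j :
  (forall k, (k < n)%nat -> A i k = A' i k) -> (forall k, (k < n)%nat -> B k j = B' k j) ->
  mmul n A B i j = mmul n A' B' i j.
Proof. intros. unfold mmul. apply fsum_ext. intros. rewrite H, H0; auto. Qed.

Lemma mpow_S_r n A k i j : (i < n)%nat -> (j < n)%nat ->
  mpow n A (S k) i j = mmul n (mpow n A k) A i j.
Proof.
  revert i j. induction k; intros i j Hi Hj.
  - simpl. rewrite mmul_mid_r, mmul_mid_l; auto.
  - change (mpow n A (S (S k)) i j) with (mmul n A (mpow n A (S k)) i j).
    rewrite (mmul_ext n A A (mpow n A (S k)) (mmul n (mpow n A k) A)).
    2: auto. 2:{ intros. apply IHk; auto. }
    rewrite <- mmul_assoc. reflexivity.
Qed.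

Lemma mpow_add n A k m i j : (i < n)%nat -> (j < n)%nat ->
  mpow n A (k + m) i j = mmul n (mpow n A k) (mpow n A m) i j.
Proof.
  revert i j. induction k; intros i j Hi Hj.
  - simpl. rewrite mmul_mid_l; auto.
  - simpl. rewrite (mmul_ext n A A (mpow n A (k+m)) (mmul n (mpow n A k) (mpow n A m))); auto.
    rewrite mmul_assoc. auto.
Qed.

Lemma is_series_zero : is_series (fun _ : nat => 0) 0.
Proof.
  assert (H := is_series_scal_r 0 _ _ (is_series_geom (1/2) ltac:(rewrite Rabs_pos_eq; lra))).
  rewrite Rmult_0_r in H. eapply is_series_ext; [|exact H]. intros; simpl; ring.
Qed.

Lemma ex_series_le_nn (a b : nat -> R) : (forall k, 0 <= a k <= b k) -> ex_series b -> ex_series a.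
Proof.
  intros H Hb. apply (ex_series_le a b); auto. intros k. specialize (H k).
  change (norm (a k)) with (Rabs (a k)). rewrite Rabs_pos_eq; lra.
Qed.

Lemma Series_le_gen (a b : nat -> R) : ex_series a -> ex_series b -> (forall k, a k <= b k) ->
  Series a <= Series b.
Proof.
  intros Ha Hb H.
  assert (0 <= Series (fun k => b k - a k)).
  { assert (Hz: Series (fun _:nat => 0) = 0).
    { apply is_series_unique. apply is_series_zero. }
    rewrite <- Hz. apply Series_le. intros k; specialize (H k); lra.
    apply (ex_series_minus b a); auto. }
  rewrite Series_minus in H0; auto. lra.
Qed.

Lemma ex_series_sum_f n (f : nat -> nat -> R) : (forall l, (l < n)%nat -> ex_series (f l)) ->
  ex_series (fun k => fsum n (fun l => f l k)) /\
  Series (fun k => fsum n (fun l => f l k)) = fsum n (fun l => Series (f l)).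
Proof.
  induction n; intros H; simpl.
  - split. exists 0. apply is_series_zero.
    apply is_series_unique. apply is_series_zero.
  - destruct IHn as [IH1 IH2]. intros; apply H; lia.
    split. apply (ex_series_plus (fun k => fsum n (fun l => f l k)) (f n)); auto.
    rewrite Series_plus; auto. rewrite IH2; auto.
Qed.

Lemma ex_series_fsum n (f : nat -> nat -> R) : (forall l, (l < n)%nat -> ex_series (f l)) ->
  ex_series (fun k => fsum n (fun l => f l k)).
Proof. intros; apply ex_series_sum_f; auto. Qed.

Lemma Series_fsum n (f : nat -> nat -> R) : (forall l, (l < n)%nat -> ex_series (f l)) ->
  Series (fun k => fsum n (fun l => f l k)) = fsum n (fun l => Series (f l)).
Proof. intros; apply ex_series_sum_f; auto. Qed.

Lemma ex_series_bounded (a : nat -> R) K : (forall k, 0 <= a k) -> (forall m, sum_f_R0 a m <= K) ->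
  ex_series a.
Proof.
  intros H0 HK. apply ex_series_Reals_1.
  apply growing_cv.
  - intros m. simpl. specialize (H0 (S m)). lra.
  - exists K. intros x [m ->]. auto.
Qed.

Lemma not_ex_series_unbounded (a : nat -> R) : (forall k, 0 <= a k) -> ~ ex_series a ->
  forall K, exists m, K < sum_f_R0 a m.
Proof.
  intros H0 Hn K. apply Classical_Prop.NNPP. intros Hc. apply Hn. apply (ex_series_bounded a K); auto.
  intros m. destruct (Rle_lt_dec (sum_f_R0 a m) K); auto. exfalso; apply Hc; exists m; auto.
Qed.

Lemma pow_sign x p q : 0 < x -> (q <= p)%nat -> 0 <= (x - 1) * (x ^ p - x ^ q).
Proof.
  intros Hx Hqp. replace p with (q + (p - q))%nat by lia. rewrite pow_add.
  assert (0 < x ^ q) by (apply pow_lt; lra).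
  replace ((x - 1) * (x ^ q * x ^ (p - q) - x ^ q)) with (x ^ q * ((x - 1) * (x ^ (p - q) - 1))) by ring.
  apply Rmult_le_pos; [lra|].
  destruct (Rle_lt_dec 1 x).
  - assert (1 <= x ^ (p - q)) by (apply pow_R1_Rle; lra). nra.
  - assert (x ^ (p - q) <= 1).
    { clear H. induction (p - q)%nat; simpl; [lra|]. assert (0 <= x ^ n) by (apply pow_le; lra). nra. }
    nra.
Qed.

Lemma geom_fsum x t : x ^ t - 1 = (x - 1) * fsum t (fun i => x ^ i).
Proof. induction t; simpl; [ring|]. rewrite Rmult_plus_distr_l, <- IHt. ring. Qed.

Lemma fsum_const n c : fsum n (fun _ => c) = INR n * c.
Proof. induction n; simpl fsum; [simpl; ring|]. rewrite IHn, S_INR. ring. Qed.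

Lemma conv_aux x t m : 0 < x -> 0 <= INR t * x ^ t * (x ^ m - 1) - INR m * (x ^ t - 1).
Proof.
  intros Hx. induction m.
  - simpl. lra.
  - rewrite S_INR. simpl pow.
    assert (E : INR t * x ^ t * (x * x ^ m - 1) - (INR m + 1) * (x ^ t - 1) =
      (INR t * x ^ t * (x ^ m - 1) - INR m * (x ^ t - 1)) +
      fsum t (fun i => (x - 1) * (x ^ (t + m) - x ^ i))).
    { rewrite fsum_scal, fsum_minus, (Rmult_minus_distr_l (x - 1)), <- geom_fsum.
      rewrite fsum_const. rewrite pow_add. ring. }
    rewrite E. assert (0 <= fsum t (fun i => (x - 1) * (x ^ (t + m) - x ^ i))).
    { apply fsum_nonneg. intros; apply pow_sign; auto; lia. }
    lra.
Qed.

Lemma pow_convex x t D : 0 < x -> (t <= D)%nat -> (0 < D)%nat ->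
  x ^ t <= (1 - INR t / INR D) + (INR t / INR D) * x ^ D.
Proof.
  intros Hx Ht HD. destruct (Nat.le_exists_sub t D Ht) as [m [HD' _]]. subst D.
  assert (HDp : 0 < INR (m + t)) by (apply lt_0_INR; lia).
  assert (H := conv_aux x t m Hx). rewrite plus_INR in *. rewrite pow_add.
  assert (E : (1 - INR t / (INR m + INR t)) + (INR t / (INR m + INR t)) * (x ^ m * x ^ t) - x ^ t
     = (INR t * x ^ t * (x ^ m - 1) - INR m * (x ^ t - 1)) / (INR m + INR t)) by (field; lra).
  assert (0 <= (INR t * x ^ t * (x ^ m - 1) - INR m * (x ^ t - 1)) / (INR m + INR t)).
  { apply Rmult_le_pos; auto. apply Rlt_le, Rinv_0_lt_compat; lra. }
  lra.
Qed.

Lemma pow_div x y n : (x / y) ^ n = x ^ n / y ^ n.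
Proof. unfold Rdiv. rewrite Rpow_mult_distr, pow_inv. auto. Qed.

Definition Hp (b C A B Mb : R) (w : nat) (y : R) : R :=
  b ^ w * y + Mb * (A ^ w - 1) - Rmax (C ^ w * y) B.

Lemma Hfun_Hp a abar c B Mbar w y :
  Hfun a abar c B Mbar w y = Hp (abar ^ 2) (c ^ 2) (a ^ 2) B Mbar w y.
Proof. unfold Hfun, Hp. rewrite !pow_mult. reflexivity. Qed.

Lemma Hp_convex b C A B Mb t D k y : 0 < b -> b < C -> 0 < A -> 0 <= Mb -> 0 <= y ->
  (t <= D)%nat -> (0 < D)%nat ->
  Hp b C A B Mb (t + k) y <=
  (1 - INR t / INR D) * Hp b C A B Mb k (C ^ t * y) +
  (INR t / INR D) * Hp b C A B Mb (D + k) (y / C ^ (D - t)).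
Proof.
  intros Hb HbC HA HM Hy Ht HD. unfold Hp.
  set (s := INR t / INR D).
  assert (HDp : 0 < INR D) by (apply lt_0_INR; lia).
  assert (Hs0 : 0 <= s) by (unfold s; apply Rmult_le_pos; [apply pos_INR| apply Rlt_le, Rinv_0_lt_compat; lra]).
  assert (HC : 0 < C) by lra.
  assert (HCD : C ^ D = C ^ t * C ^ (D - t)) by (rewrite <- pow_add; f_equal; lia).
  assert (HCt : 0 < C ^ (D - t)) by (apply pow_lt; lra).
  assert (HCt' : 0 < C ^ t) by (apply pow_lt; lra).
  assert (E1 : C ^ (D + k) * (y / C ^ (D - t)) = C ^ k * (C ^ t * y)).
  { rewrite pow_add, HCD. field. lra. }
  rewrite E1.
  set (r := b / C).
  assert (Hr : 0 < r) by (unfold r; apply Rdiv_lt_0_compat; lra).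
  assert (Er1 : b ^ (t + k) = b ^ k * C ^ t * r ^ t).
  { unfold r. rewrite pow_add, pow_div. field. lra. }
  assert (Er2 : b ^ (D + k) * (y / C ^ (D - t)) = b ^ k * C ^ t * y * r ^ D).
  { unfold r. rewrite pow_add, pow_div. rewrite HCD. field. lra. }
  rewrite Er1, Er2.
  assert (Hcr := pow_convex r t D Hr Ht HD). fold s in Hcr.
  assert (HcA := pow_convex A t D HA Ht HD). fold s in HcA.
  assert (HP : 0 <= b ^ k * C ^ t * y).
  { apply Rmult_le_pos; auto. apply Rmult_le_pos; apply pow_le; lra. }
  assert (HAk : 0 < A ^ k) by (apply pow_lt; lra).
  rewrite (pow_add A t k), (pow_add A D k).
  assert (I1 : b ^ k * C ^ t * y * r ^ t <= b ^ k * C ^ t * y * ((1 - s) + s * r ^ D))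
    by (apply Rmult_le_compat_l; auto).
  assert (I2 : Mb * (A ^ t * A ^ k) <= Mb * (A ^ k * ((1 - s) + s * A ^ D)))
    by (apply Rmult_le_compat_l; auto; rewrite Rmult_comm; apply Rmult_le_compat_l; lra).
  replace (b ^ k * C ^ t * r ^ t * y) with (b ^ k * C ^ t * y * r ^ t) by ring.
  replace (b ^ k * (C ^ t * y)) with (b ^ k * C ^ t * y) by ring.
  replace (C ^ (t + k) * y) with (C ^ k * (C ^ t * y)) by (rewrite pow_add; ring).
  set (mx := Rmax (C ^ k * (C ^ t * y)) B).
  match goal with |- _ <= ?R => replace R with
    (b ^ k * C ^ t * y * (1 - s + s * r ^ D) + Mb * (A ^ k * (1 - s + s * A ^ D)) - Mb - mx) by ring end.
  lra.
Qed.

Lemma pow_le1 x n : 0 <= x -> x <= 1 -> x ^ n <= 1.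
Proof. intros. induction n; simpl; [lra|]. assert (0 <= x ^ n) by (apply pow_le; lra). nra. Qed.

Lemma Hp_le_F b C A B Mb D k y : 0 < b -> b <= C -> C <= 1 -> 0 <= B -> 0 <= y ->
  Hp b C A B Mb (D + k) y <= B * (b ^ (D + k) / C ^ D - C ^ k) + Mb * (A ^ (D + k) - 1).
Proof.
  intros Hb HbC HC1 HB Hy. unfold Hp.
  assert (HC : 0 < C) by lra.
  assert (HCD : 0 < C ^ D) by (apply pow_lt; lra).
  assert (Hbw : b ^ (D + k) <= C ^ D * C ^ k) by (rewrite <- pow_add; apply pow_incr; lra).
  assert (HCk : C ^ k <= 1) by (apply pow_le1; lra).
  assert (HCk0 : 0 <= C ^ k) by (apply pow_le; lra).
  rewrite (pow_add C D k).
  destruct (Rle_lt_dec (B / C ^ D) y) as [Hyb|Hyb].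
  - assert (Hm : C ^ D * C ^ k * y <= Rmax (C ^ D * C ^ k * y) B) by apply Rmax_l.
    assert (E : B * (b ^ (D + k) / C ^ D - C ^ k) = (b ^ (D + k) - C ^ D * C ^ k) * (B / C ^ D))
      by (field; lra).
    rewrite E.
    assert ((b ^ (D + k) - C ^ D * C ^ k) * y <= (b ^ (D + k) - C ^ D * C ^ k) * (B / C ^ D)).
    { apply Rmult_le_compat_neg_l; lra. }
    lra.
  - assert (Hm : B <= Rmax (C ^ D * C ^ k * y) B) by apply Rmax_r.
    assert (E : B * (b ^ (D + k) / C ^ D - C ^ k) = b ^ (D + k) * (B / C ^ D) - B * C ^ k)
      by (field; lra).
    rewrite E.
    assert (b ^ (D + k) * y <= b ^ (D + k) * (B / C ^ D)).
    { apply Rmult_le_compat_l; [apply pow_le; lra| lra]. }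
    assert (B * C ^ k <= B) by nra.
    lra.
Qed.

Lemma Hp_le_MA b C A B Mb w y : 0 < b -> b <= C -> 0 <= B -> 0 <= Mb -> 0 <= y ->
  Hp b C A B Mb w y <= Mb * A ^ w.
Proof.
  intros. unfold Hp. assert (b ^ w <= C ^ w) by (apply pow_incr; lra).
  assert (C ^ w * y <= Rmax (C ^ w * y) B) by apply Rmax_l.
  assert (b ^ w * y <= C ^ w * y) by (apply Rmult_le_compat_r; lra). nra.
Qed.

Lemma Hp_abs b C A B Mb w y : 0 < b -> b <= C -> C <= 1 -> 1 <= A -> 0 <= B -> 0 <= Mb -> 0 <= y ->
  Rabs (Hp b C A B Mb w y) <= (2 * y + 2 * Mb + B) * A ^ w.
Proof.
  intros. unfold Hp.
  assert (0 <= b ^ w <= 1) by (split; [apply pow_le; lra| apply pow_le1; lra]).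
  assert (0 <= C ^ w <= 1) by (split; [apply pow_le; lra| apply pow_le1; lra]).
  assert (1 <= A ^ w) by (apply pow_R1_Rle; lra).
  assert (0 <= Rmax (C ^ w * y) B <= C ^ w * y + B).
  { split. apply Rle_trans with B; auto; apply Rmax_r.
    apply Rmax_lub; nra. }
  apply Rabs_le. split; nra.
Qed.

Lemma Hp_0 b C A B Mb y : Hp b C A B Mb 0 y <= 0.
Proof. unfold Hp. simpl. assert (1 * y <= Rmax (1 * y) B) by apply Rmax_l. lra. Qed.

Definition nonneg_mat n (N : mat) := forall i j, (i < n)%nat -> (j < n)%nat -> 0 <= N i j.

Definition Conv n (N : mat) (t : R) :=
  forall i j, (i < n)%nat -> (j < n)%nat -> ex_series (fun k => t ^ k * mpow n N k i j).

Lemma mid_nonneg i j : 0 <= mid i j.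
Proof. unfold mid. destruct (Nat.eqb i j); lra. Qed.

Lemma mid_le1 i j : mid i j <= 1.
Proof. unfold mid. destruct (Nat.eqb i j); lra. Qed.

Lemma mmul_nonneg n A B i j : (forall k, (k < n)%nat -> 0 <= A i k) ->
  (forall k, (k < n)%nat -> 0 <= B k j) -> 0 <= mmul n A B i j.
Proof. intros. unfold mmul. apply fsum_nonneg. intros. apply Rmult_le_pos; auto. Qed.

Lemma mpow_nonneg n N k : nonneg_mat n N -> nonneg_mat n (mpow n N k).
Proof.
  intros HN. induction k; intros i j Hi Hj; simpl. apply mid_nonneg.
  apply mmul_nonneg; intros; [apply HN| apply IHk]; auto.
Qed.

Lemma Conv_mono n N s t : nonneg_mat n N -> 0 <= s <= t -> Conv n N t -> Conv n N s.
Proof.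
  intros HN Hs Ht i j Hi Hj. apply (ex_series_le_nn _ (fun k => t ^ k * mpow n N k i j)); [|apply Ht; auto].
  intros k. assert (0 <= mpow n N k i j) by (apply mpow_nonneg; auto).
  assert (0 <= s ^ k) by (apply pow_le; lra).
  assert (s ^ k <= t ^ k) by (apply pow_incr; lra). split; [nra|].
  apply Rmult_le_compat_r; auto.
Qed.

Lemma mpow_bound n Y beta q : nonneg_mat n Y -> 0 <= beta ->
  (forall i j, (i < n)%nat -> (j < n)%nat -> Y i j <= beta) ->
  forall i j, (i < n)%nat -> (j < n)%nat -> mpow n Y q i j <= (INR n * beta) ^ q.
Proof.
  intros HY Hb HYb. induction q; intros i j Hi Hj; simpl. apply mid_le1.
  unfold mmul. apply Rle_trans with (fsum n (fun k => beta * (INR n * beta) ^ q)).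
  - apply fsum_le. intros k Hk. assert (0 <= mpow n Y q k j) by (apply mpow_nonneg; auto).
    assert (0 <= Y i k) by auto. apply Rmult_le_compat; auto.
  - rewrite fsum_const. lra.
Qed.

Lemma fsum_ge_term m (f : nat -> R) l : (forall k, (k < m)%nat -> 0 <= f k) -> (l < m)%nat -> f l <= fsum m f.
Proof.
  induction m; intros Hf Hl; [lia|]. simpl. destruct (Nat.eq_dec l m) as [->|].
  - assert (0 <= fsum m f) by (apply fsum_nonneg; intros; apply Hf; lia). lra.
  - assert (f l <= fsum m f) by (apply IHm; [intros; apply Hf; lia| lia]). assert (0 <= f m) by (apply Hf; lia). lra.
Qed.

Definition msumall n (N : mat) := fsum n (fun i => fsum n (fun j => N i j)).

Lemma msumall_ge n N i j : nonneg_mat n N -> (i < n)%nat -> (j < n)%nat -> N i j <= msumall n N.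
Proof.
  intros HN Hi Hj. unfold msumall.
  assert (G : forall m (f : nat -> R) l, (forall k, (k < m)%nat -> 0 <= f k) -> (l < m)%nat -> f l <= fsum m f).
  { induction m; intros f l Hf Hl; [lia|]. simpl. destruct (Nat.eq_dec l m) as [->|].
    - assert (0 <= fsum m f) by (apply fsum_nonneg; intros; apply Hf; lia). lra.
    - assert (f l <= fsum m f) by (apply IHm; [intros; apply Hf; lia| lia]). assert (0 <= f m) by (apply Hf; lia). lra. }
  apply Rle_trans with (fsum n (fun j => N i j)).
  - apply (G n (fun j => N i j)); auto.
  - apply (G n (fun i => fsum n (fun j => N i j))); auto. intros; apply fsum_nonneg; auto.
Qed.

Lemma msumall_nonneg n N : nonneg_mat n N -> 0 <= msumall n N.
Proof. intros. unfold msumall. apply fsum_nonneg; intros; apply fsum_nonneg; auto. Qed.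

Lemma Conv_small n N : nonneg_mat n N -> exists t0, 0 < t0 /\ Conv n N t0.
Proof.
  intros HN. set (beta := msumall n N). assert (Hb : 0 <= beta) by apply msumall_nonneg, HN.
  set (t0 := / (2 * (INR n * beta + 1))).
  assert (Hn : 0 <= INR n) by apply pos_INR.
  assert (Ht0 : 0 < t0) by (unfold t0; apply Rinv_0_lt_compat; nra).
  exists t0. split; auto. intros i j Hi Hj.
  apply (ex_series_le_nn _ (fun k => (/2) ^ k)); [| apply ex_series_geom; rewrite Rabs_pos_eq; lra].
  intros k. assert (0 <= mpow n N k i j) by (apply mpow_nonneg; auto).
  assert (0 <= t0 ^ k) by (apply pow_le; lra). split; [nra|].
  assert (mpow n N k i j <= (INR n * beta) ^ k) by (apply mpow_bound; auto; intros; apply msumall_ge; auto).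
  apply Rle_trans with (t0 ^ k * (INR n * beta) ^ k). apply Rmult_le_compat_l; auto.
  rewrite <- Rpow_mult_distr. apply pow_incr. split. apply Rmult_le_pos; [lra|nra].
  unfold t0. apply Rmult_le_reg_l with (2 * (INR n * beta + 1)). nra.
  field_simplify; nra.
Qed.

Lemma fsum_add p q f : fsum (p + q) f = fsum p f + fsum q (fun s => f (p + s)%nat).
Proof. induction q. rewrite Nat.add_0_r. simpl. ring. rewrite Nat.add_succ_r. simpl fsum. rewrite IHq. ring. Qed.

Lemma sum_f_R0_fsum a N : sum_f_R0 a N = fsum (S N) a.
Proof. induction N; simpl; [ring|]. simpl in IHN. rewrite IHN. ring. Qed.

Lemma fsum_mono_count p q f : (p <= q)%nat -> (forall k, 0 <= f k) -> fsum p f <= fsum q f.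
Proof.
  intros H Hf. replace q with (p + (q - p))%nat by lia. rewrite fsum_add.
  assert (0 <= fsum (q - p) (fun s => f (p + s)%nat)) by (apply fsum_nonneg; auto). lra.
Qed.

Lemma fsum_half Q : fsum Q (fun q => (/2) ^ q) = 2 - 2 * (/2) ^ Q.
Proof. induction Q; simpl fsum; [rewrite pow_O; ring|]. rewrite IHQ. rewrite <- tech_pow_Rmult. field. Qed.

Lemma mpow_scale n t N k i j : mpow n (mscale t N) k i j = t ^ k * mpow n N k i j.
Proof.
  revert i j. induction k; intros i j; simpl. ring.
  unfold mmul. rewrite <- fsum_scal. apply fsum_ext. intros l _. rewrite IHk. unfold mscale. ring.
Qed.

Lemma mpow_mul n X q m i j : (i < n)%nat -> (j < n)%nat ->
  mpow n X (q * m) i j = mpow n (mpow n X m) q i j.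
Proof.
  revert i j. induction q; intros i j Hi Hj; simpl. auto.
  rewrite mpow_add by auto. apply mmul_ext; auto.
Qed.

Lemma fin_eventually n (P : nat -> nat -> Prop) :
  (forall i, (i < n)%nat -> exists M, forall m, (M <= m)%nat -> P i m) ->
  exists M, forall i, (i < n)%nat -> forall m, (M <= m)%nat -> P i m.
Proof.
  induction n; intros H. exists 0%nat; intros; lia.
  destruct IHn as [M1 HM1]. intros; apply H; lia.
  destruct (H n ltac:(lia)) as [M2 HM2].
  exists (Nat.max M1 M2). intros i Hi m Hm. destruct (Nat.eq_dec i n) as [->|].
  apply HM2; lia. apply HM1; lia.
Qed.

Lemma Conv_terms_small n N r eps : Conv n N r -> 0 < eps ->
  exists M, forall i, (i < n)%nat -> forall j, (j < n)%nat -> forall m, (M <= m)%nat ->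
    r ^ m * mpow n N m i j <= eps.
Proof.
  intros Hc He.
  destruct (fin_eventually n (fun i m => forall j, (j < n)%nat -> r ^ m * mpow n N m i j <= eps)) as [M HM].
  2:{ exists M. intros i Hi j Hj m Hm. apply HM; auto. }
  intros i Hi.
  destruct (fin_eventually n (fun j m => r ^ m * mpow n N m i j <= eps)) as [M HM].
  - intros j Hj. assert (L := ex_series_lim_0 _ (Hc i j Hi Hj)).
    apply is_lim_seq_Reals in L. destruct (L eps He) as [M HM]. exists M.
    intros m Hm. specialize (HM m ltac:(lia)). unfold R_dist in HM. rewrite Rminus_0_r in HM.
    apply Rabs_lt_between in HM. lra.
  - exists M. intros m Hm j Hj. apply HM; auto.
Qed.

Lemma Conv_of_power n N t m : nonneg_mat n N -> 0 <= t -> (0 < m)%nat -> (0 < n)%nat ->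
  (forall i j, (i < n)%nat -> (j < n)%nat -> t ^ m * mpow n N m i j <= / (2 * INR n)) ->
  Conv n N t.
Proof.
  intros HN Ht Hm Hn Hsm.
  set (X := mscale t N).
  assert (HX : nonneg_mat n X) by (intros i j Hi Hj; unfold X, mscale; apply Rmult_le_pos; auto).
  assert (HnR : 0 < INR n) by (apply lt_0_INR; auto).
  set (Y := mpow n X m).
  assert (HY : nonneg_mat n Y) by (apply mpow_nonneg; auto).
  assert (HYq : forall q i j, (i < n)%nat -> (j < n)%nat -> mpow n Y q i j <= (/2) ^ q).
  { intros q i j Hi Hj. replace (/2) with (INR n * / (2 * INR n)) by (field; lra).
    apply mpow_bound; auto. apply Rlt_le, Rinv_0_lt_compat; lra.
    intros i' j' Hi' Hj'. unfold Y, X. rewrite mpow_scale. auto. }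
  set (K := fsum m (fun s => msumall n (mpow n X s))).
  assert (HK : forall s i j, (s < m)%nat -> (i < n)%nat -> (j < n)%nat -> mpow n X s i j <= K).
  { intros s i j Hs Hi Hj. apply Rle_trans with (msumall n (mpow n X s)).
    apply msumall_ge; auto. apply mpow_nonneg; auto.
    apply (fsum_ge_term m (fun s => msumall n (mpow n X s))); auto.
    intros; apply msumall_nonneg, mpow_nonneg; auto. }
  assert (HK0 : 0 <= K) by (unfold K; apply fsum_nonneg; intros; apply msumall_nonneg, mpow_nonneg; auto).
  intros i j Hi Hj.
  set (a := fun k => mpow n X k i j).
  assert (Ha0 : forall k, 0 <= a k) by (intros; unfold a; apply mpow_nonneg; auto).
  assert (Hterm : forall q s, (s < m)%nat -> a (q * m + s)%nat <= INR n * K * (/2) ^ q).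
  { intros q s Hs. unfold a. rewrite mpow_add by auto. unfold mmul.
    apply Rle_trans with (fsum n (fun l => (/2) ^ q * K)).
    - apply fsum_le. intros l Hl. rewrite mpow_mul by auto. fold Y.
      assert (0 <= mpow n Y q i l) by (apply mpow_nonneg; auto).
      assert (0 <= mpow n X s l j) by (apply mpow_nonneg; auto).
      apply Rmult_le_compat; auto.
    - rewrite fsum_const. lra. }
  assert (Hblock : forall Q, fsum (Q * m) a <= fsum Q (fun q => INR m * (INR n * K * (/2) ^ q))).
  { induction Q. simpl. lra.
    replace (S Q * m)%nat with (Q * m + m)%nat by lia. rewrite fsum_add. simpl fsum.
    assert (fsum m (fun s => a (Q * m + s)%nat) <= INR m * (INR n * K * (/2) ^ Q)).
    { rewrite <- fsum_const. apply fsum_le. intros; apply Hterm; auto. }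
    lra. }
  assert (Hbound : forall Q, fsum (Q * m) a <= 2 * INR m * INR n * K).
  { intros Q. eapply Rle_trans. apply Hblock.
    rewrite (fsum_ext _ _ (fun q => (INR m * INR n * K) * (/2) ^ q)) by (intros; ring).
    rewrite fsum_scal, fsum_half.
    assert (0 <= INR m * INR n * K) by (apply Rmult_le_pos; auto; apply Rmult_le_pos; apply pos_INR).
    assert (0 <= (/2) ^ Q) by (apply pow_le; lra). nra. }
  assert (Ea : ex_series a).
  { apply (ex_series_bounded a (2 * INR m * INR n * K)); auto.
    intros N'. rewrite sum_f_R0_fsum. eapply Rle_trans; [|apply (Hbound (S N'))].
    apply fsum_mono_count; auto. nia. }
  eapply ex_series_ext; [|exact Ea]. intros k. unfold a, X. rewrite mpow_scale. auto.
Qed.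

Lemma nat_gt x : exists m : nat, x < INR m.
Proof. destruct (INR_archimed 1 x) as [m Hm]; [lra|]. exists m. lra. Qed.

Lemma bern_up x m : 0 <= x -> (1 + x) ^ m * (1 - INR m * x) <= 1.
Proof.
  intros Hx. induction m. simpl. lra.
  rewrite S_INR. simpl pow.
  destruct (Rle_lt_dec 0 (1 - INR m * x)).
  - assert (0 <= (1 + x) ^ m) by (apply pow_le; lra).
    assert (E : (1 + x) * (1 + x) ^ m * (1 - (INR m + 1) * x) =
               (1 + x) ^ m * (1 - INR m * x) - (1 + x) ^ m * ((INR m + 1) * x * x)) by ring.
    rewrite E. assert (0 <= (1 + x) ^ m * ((INR m + 1) * x * x)).
    { apply Rmult_le_pos; auto. assert (0 <= INR m) by apply pos_INR. nra. }
    lra.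
  - assert (0 <= (1 + x) ^ m) by (apply pow_le; lra).
    assert (0 <= INR m) by apply pos_INR.
    assert ((1 - (INR m + 1) * x) < 0) by nra.
    assert (0 <= (1 + x) * (1 + x) ^ m) by (apply Rmult_le_pos; lra).
    nra.
Qed.

Lemma bern_down x m : 0 <= x <= 1 -> 1 - INR m * x <= (1 - x) ^ m.
Proof.
  intros Hx. induction m. simpl. lra.
  rewrite S_INR. simpl pow.
  assert (0 <= (1 - x) ^ m) by (apply pow_le; lra).
  assert (0 <= INR m) by apply pos_INR.
  nra.
Qed.

Lemma Series_ge_fsum (a : nat -> R) m : ex_series a -> (forall k, 0 <= a k) -> fsum m a <= Series a.
Proof.
  intros He Ha.
  assert (Hz: Series (fun _:nat => 0) = 0) by (apply is_series_unique; apply is_series_zero).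
  destruct m. simpl. rewrite <- Hz. apply Series_le; auto. intros; split; [lra|auto].
  rewrite (Series_incr_n a (S m)) by (auto; lia). simpl Nat.pred. rewrite sum_f_R0_fsum.
  assert (0 <= Series (fun k => a (S m + k)%nat)).
  { rewrite <- Hz. apply Series_le. intros; split; [lra|auto]. apply ex_series_incr_n; auto. }
  lra.
Qed.

Lemma ex_series_scal_l' c (a : nat -> R) : ex_series a -> ex_series (fun k => c * a k).
Proof. intros H. apply (ex_series_scal c a) in H. exact H. Qed.

Lemma resolvent_col n N t j0 l : (l < n)%nat -> (j0 < n)%nat -> Conv n N t ->
  Series (fun k => t ^ k * mpow n N k l j0) =
  mid l j0 + t * fsum n (fun q => N l q * Series (fun k => t ^ k * mpow n N k q j0)).
Proof.
  intros Hl Hj Hc. rewrite Series_incr_1 by (apply Hc; auto).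
  simpl (t ^ 0). rewrite Rmult_1_l. simpl (mpow n N 0). f_equal.
  rewrite (Series_ext _ (fun k => fsum n (fun q => t * (N l q * (t ^ k * mpow n N k q j0))))).
  2:{ intros k. simpl. unfold mmul. rewrite <- fsum_scal. apply fsum_ext. intros; ring. }
  rewrite Series_fsum.
  2:{ intros q Hq. apply ex_series_scal_l', ex_series_scal_l', Hc; auto. }
  rewrite <- fsum_scal. apply fsum_ext. intros q Hq. rewrite Series_scal_l, Series_scal_l. ring.
Qed.

Lemma approx_eig n N r : nonneg_mat n N -> (0 < n)%nat -> 0 < r ->
  (forall t, 0 <= t < r -> Conv n N t) -> ~ Conv n N r ->
  forall eps, 0 < eps -> exists z : nat -> R, (forall l, (l < n)%nat -> 0 <= z l) /\ fsum n z = 1 /\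
    forall i, (i < n)%nat -> Rabs (z i - r * fsum n (fun k => N i k * z k)) <= eps.
Proof.
  intros HN Hn Hr Hlt Hnc eps Heps.
  assert (Hex : exists i0 j0, (i0 < n)%nat /\ (j0 < n)%nat /\ ~ ex_series (fun k => r ^ k * mpow n N k i0 j0)).
  { apply NNPP. intros Hc. apply Hnc. intros i j Hi Hj. apply NNPP. intros Hc2. apply Hc.
    exists i, j. auto. }
  destruct Hex as [i0 [j0 [Hi0 [Hj0 Hdiv]]]].
  set (Nm := msumall n N). assert (HNm : 0 <= Nm) by apply msumall_nonneg, HN.
  destruct (nat_gt (r * Nm / eps)) as [M0 HM0].
  assert (Hnn : forall k, 0 <= r ^ k * mpow n N k i0 j0).
  { intros; apply Rmult_le_pos; [apply pow_le; lra| apply mpow_nonneg; auto]. }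
  destruct (not_ex_series_unbounded _ Hnn Hdiv (8 / eps)) as [m' Hm'].
  set (m := Nat.max (S m') (Nat.max M0 1)).
  assert (Hm1 : (1 <= m)%nat) by lia.
  assert (HmR : 1 <= INR m) by (apply (le_INR 1); auto).
  assert (HmM0 : INR M0 <= INR m) by (apply le_INR; lia).
  assert (Hsum : 8 / eps < fsum m (fun k => r ^ k * mpow n N k i0 j0)).
  { rewrite sum_f_R0_fsum in Hm'. eapply Rlt_le_trans; [exact Hm'|]. apply fsum_mono_count; auto. lia. }
  set (t := r * (1 - / (2 * INR m))).
  assert (Hinv : 0 < / (2 * INR m) <= / 2).
  { split. apply Rinv_0_lt_compat; lra. apply Rinv_le_contravar; lra. }
  assert (Ht : 0 <= t < r) by (unfold t; split; nra).
  assert (Hct := Hlt t Ht).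
  set (w := fun l => Series (fun k => t ^ k * mpow n N k l j0)).
  assert (Hw0 : forall l, (l < n)%nat -> 0 <= w l).
  { intros l Hl. unfold w. eapply Rle_trans; [|apply (Series_ge_fsum _ 0); [apply Hct; auto|]].
    simpl; lra. intros; apply Rmult_le_pos; [apply pow_le; lra| apply mpow_nonneg; auto]. }
  assert (Hwi0 : 4 / eps < w i0).
  { unfold w.
    apply Rlt_le_trans with (fsum m (fun k => t ^ k * mpow n N k i0 j0)).
    2:{ apply Series_ge_fsum. apply Hct; auto. intros; apply Rmult_le_pos; [apply pow_le; lra| apply mpow_nonneg; auto]. }
    apply Rlt_le_trans with ((1 / 2) * fsum m (fun k => r ^ k * mpow n N k i0 j0)). lra.
    rewrite <- fsum_scal. apply fsum_le. intros k Hk.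
    assert (Hq : t ^ k = r ^ k * (1 - / (2 * INR m)) ^ k) by (unfold t; apply Rpow_mult_distr).
    rewrite Hq.
    assert (1 / 2 <= (1 - / (2 * INR m)) ^ k).
    { assert (B1 := bern_down (/ (2 * INR m)) m ltac:(lra)).
      replace (1 - INR m * / (2 * INR m)) with (1 / 2) in B1 by (field; lra).
      eapply Rle_trans; [exact B1|].
      assert (Ep : (1 - / (2 * INR m)) ^ m = (1 - / (2 * INR m)) ^ k * (1 - / (2 * INR m)) ^ (m - k))
        by (rewrite <- pow_add; f_equal; lia).
      rewrite Ep.
      assert (0 <= (1 - / (2 * INR m)) ^ k) by (apply pow_le; lra).
      assert ((1 - / (2 * INR m)) ^ (m - k) <= 1) by (apply pow_le1; lra).
      nra. }
    assert (0 <= r ^ k * mpow n N k i0 j0) by apply Hnn.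
    nra. }
  set (Wt := fsum n w).
  assert (HWt : w i0 <= Wt) by (apply fsum_ge_term; auto).
  assert (HWp : 0 < Wt) by (assert (0 < 4 / eps) by (apply Rdiv_lt_0_compat; lra); lra).
  exists (fun l => w l / Wt). split; [|split].
  - intros l Hl. apply Rdiv_le_0_compat; auto.
  - unfold Rdiv. rewrite fsum_scal_r. fold Wt. field. lra.
  - intros i Hi.
    assert (Hres : w i = mid i j0 + t * fsum n (fun q => N i q * w q)) by (apply resolvent_col; auto).
    assert (E : w i / Wt - r * fsum n (fun k => N i k * (w k / Wt)) =
                mid i j0 / Wt - (r - t) * fsum n (fun k => N i k * (w k / Wt))).
    { rewrite Hres at 1. unfold Rdiv at 1. rewrite Rmult_plus_distr_r.
      replace (fsum n (fun k => N i k * (w k / Wt))) with (fsum n (fun q => N i q * w q) / Wt).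
      field. lra. unfold Rdiv. rewrite <- fsum_scal_r. apply fsum_ext. intros; ring. }
    rewrite E.
    assert (Hs0 : 0 <= fsum n (fun k => N i k * (w k / Wt))).
    { apply fsum_nonneg. intros k Hk. apply Rmult_le_pos; [apply HN; auto| apply Rdiv_le_0_compat; auto]. }
    assert (Hs1 : fsum n (fun k => N i k * (w k / Wt)) <= Nm).
    { apply Rle_trans with (fsum n (fun k => Nm * (w k / Wt))).
      apply fsum_le. intros k Hk. apply Rmult_le_compat_r. apply Rdiv_le_0_compat; auto.
      apply msumall_ge; auto.
      rewrite fsum_scal. unfold Rdiv. rewrite fsum_scal_r. fold Wt. rewrite Rinv_r by lra. lra. }
    assert (Hrt : r - t = r / (2 * INR m)) by (unfold t; field; lra).
    assert (Hmid : 0 <= mid i j0 / Wt <= eps / 4).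
    { split. apply Rdiv_le_0_compat; [apply mid_nonneg| lra].
      apply Rle_trans with (1 / Wt). unfold Rdiv. apply Rmult_le_compat_r.
      apply Rlt_le, Rinv_0_lt_compat; lra. apply mid_le1.
      assert (4 / eps < Wt) by lra.
      assert (0 < 4 / eps) by (apply Rdiv_lt_0_compat; lra).
      replace (eps / 4) with (1 / (4 / eps)) by (field; lra).
      unfold Rdiv at 1 2. rewrite !Rmult_1_l. apply Rinv_le_contravar; lra. }
    assert (Hsecond : 0 <= (r - t) * fsum n (fun k => N i k * (w k / Wt)) <= eps / 2).
    { split. apply Rmult_le_pos; lra. rewrite Hrt.
      apply Rle_trans with (r / (2 * INR m) * Nm). apply Rmult_le_compat_l; auto.
      apply Rdiv_le_0_compat; lra.
      assert (r * Nm / eps < INR m) by lra.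
      apply Rmult_le_reg_l with (2 * INR m); [lra|].
      replace (2 * INR m * (r / (2 * INR m) * Nm)) with (r * Nm) by (field; lra).
      assert (r * Nm < INR m * eps).
      { apply Rmult_lt_reg_r with (/ eps). apply Rinv_0_lt_compat; lra.
        replace (INR m * eps * / eps) with (INR m) by (field; lra). exact H. }
      nra. }
    apply Rabs_le. lra.
Qed.

Module LA.
From mathcomp Require Import all_boot all_algebra.
From mathcomp Require Import Rstruct.
Import GRing.Theory.
Open Scope ring_scope.
Open Scope R_scope.

Lemma fsum_big n (f : nat -> R) : fsum n f = (\sum_(k < n) f k)%R.
Proof.
  elim: n => [|n IH]; first by rewrite big_ord0.
  by rewrite big_ord_recr /= IH.
Qed.

Lemma kernel_or_leftinv n (M : mat) :
  (exists v : nat -> R, (exists i, Peano.lt i n /\ v i <> 0) /\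
      forall i, Peano.lt i n -> fsum n (fun k => M i k * v k) = 0)
  \/ (exists W : mat, forall i j, Peano.lt i n -> Peano.lt j n -> mmul n W M i j = mid i j).
Proof.
  pose Mm : 'M[R]_n := \matrix_(i, j) M i j.
  have [/eqP d0|dn0] := boolP (\det Mm == 0).
  - left.
    have : (\det Mm^T == 0) by rewrite det_tr d0.
    move/det0P => [v vn0 vM].
    pose vf := fun k : nat => match (k < n)%N as b return (k < n)%N = b -> R with
                              | true => fun h => v ord0 (Ordinal h) | false => fun _ => 0 end erefl.
    have vfE : forall (k : 'I_n), vf k = v ord0 k.
      move=> [k hk] /=. rewrite /vf /=.
      have e : forall (b : bool) (E : (k < n)%N = b), (match b as b0 return (k < n)%N = b0 -> R with
                         | true => fun h => v ord0 (Ordinal h) | false => fun _ => 0 end E) = v ord0 (Ordinal hk).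
        move=> b E. case: b E => E. by congr (v _ _); apply: val_inj.
        by rewrite hk in E.
      by apply: e.
    exists vf; split.
    + have : exists i : 'I_n, v ord0 i != 0.
        apply/existsP. apply: contraR vn0 => /existsPn H. apply/eqP/rowP => i.
        rewrite mxE. move: (H i). by rewrite negbK => /eqP.
      move=> [i hi]. exists i; split; first by apply/ltP.
      rewrite vfE. exact/eqP.
    + move=> i /ltP hi. rewrite fsum_big.
      have H := congr1 (fun A : 'rV_n => A ord0 (Ordinal hi)) vM. rewrite /= !mxE in H.
      transitivity (\sum_j v ord0 j * Mm^T j (Ordinal hi))%R; last exact H.
      apply: eq_bigr => k _. by rewrite !mxE vfE mulrC.
  - right.
    have uM : Mm \in unitmx by rewrite unitmxE unitfE.
    pose W := invmx Mm.
    pose Wf := fun i j : nat => match (i < n)%N as b return (i < n)%N = b -> R with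
                 | true => fun hi => match (j < n)%N as b return (j < n)%N = b -> R with
                     | true => fun hj => W (Ordinal hi) (Ordinal hj) | false => fun _ => 0 end erefl
                 | false => fun _ => 0 end erefl.
    have WfE : forall (i j : 'I_n), Wf i j = W i j.
      move=> [i hi] [j hj] /=. rewrite /Wf /=.
      have e : forall (b : bool) (E : (i < n)%N = b), (match b as b0 return (i < n)%N = b0 -> R with
                 | true => fun hi => match (j < n)%N as b return (j < n)%N = b -> R with
                     | true => fun hj => W (Ordinal hi) (Ordinal hj) | false => fun _ => 0 end erefl
                 | false => fun _ => 0 end E) = W (Ordinal hi) (Ordinal hj).
        move=> b E; case: b E => E; last by rewrite hi in E.
        have e2 : forall (b : bool) (E' : (j < n)%N = b), (match b as b0 return (j < n)%N = b0 -> R with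
                     | true => fun hj => W (Ordinal E) (Ordinal hj) | false => fun _ => 0 end E') = W (Ordinal hi) (Ordinal hj).
          move=> b E'; case: b E' => E'; last by rewrite hj in E'.
          by congr (W _ _); apply: val_inj.
        by apply: e2.
      by apply: e.
    exists Wf => i j /ltP hi /ltP hj.
    have := congr1 (fun A : 'M_n => A (Ordinal hi) (Ordinal hj)) (mulVmx uM).
    rewrite !mxE /mmul fsum_big => H.
    have -> : mid i j = (i == j)%:R.
      rewrite /mid. case: (PeanoNat.Nat.eqb_spec i j) => [->|ne]; first by rewrite eqxx.
      by case: eqP.
    rewrite -[X in _ = X]H. rewrite /=.
    apply: eq_bigr => k _. by rewrite !mxE (WfE (Ordinal hi) k).
Qed.

End LA.
Import LA.

Lemma fsum_abs n f : Rabs (fsum n f) <= fsum n (fun k => Rabs (f k)).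
Proof. induction n; simpl. rewrite Rabs_R0; lra. eapply Rle_trans; [apply Rabs_triang|]. lra. Qed.

Lemma no_leftinv n N r :
  (forall eps, 0 < eps -> exists z : nat -> R, (forall l, (l < n)%nat -> 0 <= z l) /\ fsum n z = 1 /\
    forall i, (i < n)%nat -> Rabs (z i - r * fsum n (fun k => N i k * z k)) <= eps) ->
  ~ exists W : mat, forall i j, (i < n)%nat -> (j < n)%nat ->
      mmul n W (msub mid (mscale r N)) i j = mid i j.
Proof.
  intros Happ [W HW].
  set (Wm := fsum n (fun i => fsum n (fun k => Rabs (W i k)))).
  assert (HWm : 0 <= Wm) by (apply fsum_nonneg; intros; apply fsum_nonneg; intros; apply Rabs_pos).
  destruct (Happ (/ (2 * (Wm + 1)))) as [z [Hz0 [Hz1 Hz]]].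
  apply Rinv_0_lt_compat; lra.
  set (eps := / (2 * (Wm + 1))) in *.
  assert (Heps : 0 < eps) by (unfold eps; apply Rinv_0_lt_compat; lra).
  assert (Hzi : forall i, (i < n)%nat -> z i <= fsum n (fun k => Rabs (W i k)) * eps).
  { intros i Hi.
    assert (E : z i = fsum n (fun k => W i k * (z k - r * fsum n (fun j => N k j * z j)))).
    { transitivity (fsum n (fun j => mid i j * z j)).
      { unfold mid. symmetry. apply (fsum_delta n i z Hi). }
      transitivity (fsum n (fun j => mmul n W (msub mid (mscale r N)) i j * z j)).
      { apply fsum_ext. intros j Hj. rewrite HW; auto. }
      unfold mmul. rewrite (fsum_ext n _ (fun j => fsum n (fun k => W i k * msub mid (mscale r N) k j * z j))).
      2:{ intros j _. rewrite <- fsum_scal_r. auto. }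
      rewrite fsum_swap. apply fsum_ext. intros k Hk. rewrite <- fsum_scal.
      rewrite (fsum_ext n _ (fun j => W i k * (mid k j * z j) - W i k * (r * (N k j * z j)))).
      2:{ intros; unfold msub, mscale; ring. }
      rewrite fsum_minus, fsum_scal, fsum_scal, fsum_scal.
      unfold mid. rewrite (fsum_delta n k z Hk).
      ring. }
    rewrite E. eapply Rle_trans; [apply Rle_abs|]. eapply Rle_trans; [apply fsum_abs|].
    rewrite <- fsum_scal_r. apply fsum_le. intros k Hk. rewrite Rabs_mult.
    apply Rmult_le_compat_l; [apply Rabs_pos| apply Hz; auto]. }
  assert (1 <= Wm * eps).
  { rewrite <- Hz1. unfold Wm. rewrite <- fsum_scal_r. apply fsum_le. auto. }
  assert (Wm * eps < 1).
  { unfold eps. apply Rmult_lt_reg_l with (2 * (Wm + 1)); [lra|].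
    field_simplify; lra. }
  lra.
Qed.

Lemma cauchy_schwarz n a x :
  (fsum n (fun k => a k * x k)) ^ 2 <= fsum n (fun k => a k ^ 2) * fsum n (fun k => x k ^ 2).
Proof.
  set (Sa := fsum n (fun k => a k ^ 2)). set (Sx := fsum n (fun k => x k ^ 2)).
  set (Sax := fsum n (fun k => a k * x k)).
  assert (Hq : forall t, 0 <= Sa * t ^ 2 - 2 * t * Sax + Sx).
  { intros t. assert (0 <= fsum n (fun k => (a k * t - x k) ^ 2)) by (apply fsum_nonneg; intros; apply pow2_ge_0).
    replace (Sa * t ^ 2 - 2 * t * Sax + Sx) with (fsum n (fun k => (a k * t - x k) ^ 2)); auto.
    unfold Sa, Sax, Sx. rewrite <- fsum_scal_r, <- fsum_scal, <- fsum_minus, <- fsum_plus.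
    apply fsum_ext. intros; ring. }
  assert (HSa : 0 <= Sa) by (apply fsum_nonneg; intros; apply pow2_ge_0).
  destruct (Rle_lt_dec Sa 0).
  - assert (Sa = 0) by lra.
    destruct (Req_dec Sax 0) as [E|E].
    + rewrite E. assert (0 <= Sx) by (apply fsum_nonneg; intros; apply pow2_ge_0). nra.
    + exfalso. specialize (Hq ((Sx + 1) / (2 * Sax))). rewrite H in Hq.
      replace (0 * ((Sx + 1) / (2 * Sax)) ^ 2 - 2 * ((Sx + 1) / (2 * Sax)) * Sax + Sx) with (-1) in Hq
        by (field; auto). lra.
  - specialize (Hq (Sax / Sa)).
    replace (Sa * (Sax / Sa) ^ 2 - 2 * (Sax / Sa) * Sax + Sx) with (Sx - Sax ^ 2 / Sa) in Hq by (field; lra).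
    assert (Sax ^ 2 / Sa <= Sx) by lra.
    apply Rmult_le_reg_r with (/ Sa). apply Rinv_0_lt_compat; lra.
    replace (Sa * Sx * / Sa) with Sx by (field; lra). exact H.
Qed.

Definition Fbound n (N : mat) := fsum n (fun i => fsum n (fun k => N i k ^ 2)).

Lemma eig_bound n N lr li : is_eigval n N lr li -> lr ^ 2 + li ^ 2 <= Fbound n N.
Proof.
  intros [vr [vi [[i0 [Hi0 Hnz]] Heq]]].
  set (S := fsum n (fun k => vr k ^ 2 + vi k ^ 2)).
  assert (HS : 0 < S).
  { assert (0 < vr i0 ^ 2 + vi i0 ^ 2).
    { destruct Hnz as [H|H]; [assert (0 < vr i0 ^ 2) by (apply pow2_gt_0; auto); assert (0 <= vi i0 ^ 2) by apply pow2_ge_0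
        |assert (0 < vi i0 ^ 2) by (apply pow2_gt_0; auto); assert (0 <= vr i0 ^ 2) by apply pow2_ge_0]; lra. }
    eapply Rlt_le_trans; [exact H|]. apply (fsum_ge_term n (fun k => vr k ^ 2 + vi k ^ 2)); auto.
    intros; assert (0 <= vr k ^ 2) by apply pow2_ge_0; assert (0 <= vi k ^ 2) by apply pow2_ge_0; lra. }
  assert (E : fsum n (fun i => (fsum n (fun k => N i k * vr k)) ^ 2 + (fsum n (fun k => N i k * vi k)) ^ 2)
              = (lr ^ 2 + li ^ 2) * S).
  { unfold S. rewrite <- fsum_scal. apply fsum_ext. intros i Hi. destruct (Heq i Hi) as [E1 E2].
    rewrite E1, E2. ring. }
  assert (L : fsum n (fun i => (fsum n (fun k => N i k * vr k)) ^ 2 + (fsum n (fun k => N i k * vi k)) ^ 2)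
              <= Fbound n N * S).
  { unfold Fbound, S. rewrite <- fsum_scal_r. apply fsum_le. intros i Hi.
    assert (C1 := cauchy_schwarz n (fun k => N i k) vr).
    assert (C2 := cauchy_schwarz n (fun k => N i k) vi).
    rewrite fsum_plus. lra. }
  rewrite E in L. apply Rmult_le_reg_r with S; auto.
Qed.

Lemma spec_ge n N lr li : is_eigval n N lr li -> sqrt (lr ^ 2 + li ^ 2) <= spectral_radius n N.
Proof.
  intros He. unfold spectral_radius.
  set (Es := fun m => exists lr li, is_eigval n N lr li /\ m = sqrt (lr ^ 2 + li ^ 2)).
  assert (Hex : exists r, is_lub Es r).
  { destruct (completeness Es) as [r Hr].
    - exists (sqrt (Fbound n N)). intros x [lr' [li' [He' ->]]]. apply sqrt_le_1_alt. apply eig_bound; auto.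
    - exists (sqrt (lr ^ 2 + li ^ 2)). exists lr, li. auto.
    - exists r; auto. }
  assert (Hl := epsilon_spec (inhabits 0) (fun r => is_lub Es r) Hex).
  destruct Hl as [Hub _]. apply Hub. exists lr, li. auto.
Qed.

Lemma spec_conv n N A : nonneg_mat n N -> (0 < n)%nat -> 0 < A ->
  A * spectral_radius n N < 1 -> Conv n N A.
Proof.
  intros HN Hn HA Hsp. apply NNPP. intros HnA.
  set (E := fun t => 0 <= t /\ Conv n N t).
  assert (HEb : forall t, E t -> t <= A).
  { intros t [Ht0 Hct]. destruct (Rle_lt_dec t A); auto. exfalso. apply HnA.
    apply (Conv_mono n N A t); auto. lra. }
  destruct (Conv_small n N HN) as [t0 [Ht0 Hc0]].
  destruct (completeness E) as [r [Hub Hlub]].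
  { exists A. intros t Ht. apply HEb; auto. }
  { exists t0. split; auto; lra. }
  assert (Hr0 : t0 <= r) by (apply Hub; split; auto; lra).
  assert (HrA : r <= A) by (apply Hlub; intros t Ht; apply HEb; auto).
  assert (Hlt : forall t, 0 <= t < r -> Conv n N t).
  { intros t Ht. apply NNPP. intros Hnt.
    assert (r <= t).
    { apply Hlub. intros s [Hs0 Hcs]. destruct (Rle_lt_dec s t); auto. exfalso. apply Hnt.
      apply (Conv_mono n N t s); auto. lra. }
    lra. }
  assert (HnR : 0 < INR n) by (apply lt_0_INR; auto).
  assert (Hnc : ~ Conv n N r).
  { intros Hcr.
    destruct (Conv_terms_small n N r (/ (8 * INR n)) Hcr) as [M HM].
    apply Rinv_0_lt_compat; lra.
    set (m := Nat.max M 1).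
    assert (HmR : 1 <= INR m) by (apply (le_INR 1); lia).
    set (x := / (2 * INR m)).
    assert (Hx : 0 < x) by (unfold x; apply Rinv_0_lt_compat; lra).
    set (t' := r * (1 + x)).
    assert (Hpow : (1 + x) ^ m <= 2).
    { assert (B := bern_up x m ltac:(lra)).
      replace (1 - INR m * x) with (1 / 2) in B by (unfold x; field; lra).
      assert (0 <= (1 + x) ^ m) by (apply pow_le; lra). lra. }
    assert (Hct' : Conv n N t').
    { apply (Conv_of_power n N t' m); auto. unfold t'; nra. lia.
      intros i j Hi Hj. unfold t'. rewrite Rpow_mult_distr.
      assert (H1 : r ^ m * mpow n N m i j <= / (8 * INR n)) by (apply HM; auto; lia).
      assert (H2 : 0 <= r ^ m * mpow n N m i j) by (apply Rmult_le_pos; [apply pow_le; lra| apply mpow_nonneg; auto]).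
      replace (r ^ m * (1 + x) ^ m * mpow n N m i j) with ((1 + x) ^ m * (r ^ m * mpow n N m i j)) by ring.
      assert (0 <= (1 + x) ^ m) by (apply pow_le; lra).
      apply Rle_trans with (2 * / (8 * INR n)). apply Rmult_le_compat; auto.
      apply Rmult_le_reg_l with (8 * INR n); [lra|]. field_simplify; lra. }
    assert (t' <= r) by (apply Hub; split; auto; unfold t'; nra).
    unfold t' in H. nra. }
  assert (Happ := approx_eig n N r HN Hn ltac:(lra) Hlt Hnc).
  assert (Hnl := no_leftinv n N r Happ).
  destruct (kernel_or_leftinv n (msub mid (mscale r N))) as [[v [[i0 [Hi0 Hv0]] Hv]]|Hw]; [|exfalso; apply Hnl; exact Hw].
  assert (Heig : is_eigval n N (/ r) 0).
  { exists v, (fun _ => 0). split. exists i0. split; auto.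
    intros i Hi. specialize (Hv i Hi).
    assert (E0 : fsum n (fun k => msub mid (mscale r N) i k * v k) = v i - r * fsum n (fun k => N i k * v k)).
    { unfold msub, mscale. rewrite (fsum_ext n _ (fun k => mid i k * v k - r * (N i k * v k))) by (intros; ring).
      rewrite fsum_minus, fsum_scal. unfold mid. rewrite (fsum_delta n i v Hi). auto. }
    rewrite E0 in Hv. split.
    - apply Rmult_eq_reg_l with r; [|lra]. field_simplify; [|lra]. lra.
    - rewrite (fsum_ext n _ (fun _ => 0)) by (intros; ring). rewrite fsum_zero. ring. }
  assert (Hs := spec_ge n N (/ r) 0 Heig).
  replace ((/ r) ^ 2 + 0 ^ 2) with ((/ r) ^ 2) in Hs by ring.
  rewrite sqrt_pow2 in Hs by (apply Rlt_le, Rinv_0_lt_compat; lra).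
  assert (A * / r <= A * spectral_radius n N) by (apply Rmult_le_compat_l; lra).
  assert (1 <= A * / r).
  { apply Rmult_le_reg_r with r; [lra|]. field_simplify; lra. }
  lra.
Qed.

Lemma abstract_arg n (Phi : nat -> nat -> R -> R) (P1 : mat) (e : nat -> R) (C q U : R) (D : nat) :
  (0 < D)%nat -> 0 < C -> q < 0 ->
  (forall i, (i < n)%nat -> 0 <= e i <= 1) ->
  col_stochastic n P1 ->
  (forall i y, (i < n)%nat -> 0 <= y -> Phi i 0%nat y <= e i * fsum n (fun j => P1 j i * Phi j 1%nat y)) ->
  (forall i y t, (i < n)%nat -> 0 <= y -> (t <= D)%nat ->
     Phi i t y <= (1 - INR t / INR D) * Phi i 0%nat (C ^ t * y) + (INR t / INR D) * Phi i D (y / C ^ (D - t))) ->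
  (forall i y, (i < n)%nat -> 0 <= y -> Phi i D y <= q) ->
  (forall i y, (i < n)%nat -> 0 <= y -> Phi i 1%nat y <= U) ->
  forall i y t, (i < n)%nat -> 0 <= y -> (1 <= t <= D)%nat -> Phi i t y <= q / INR D.
Proof.
  intros HD HC Hq He [HP0 HP1] Ha Hb Hc Hd.
  assert (HDR : 0 < INR D) by (apply lt_0_INR; auto).
  set (Es := fun z => exists i y, (i < n)%nat /\ 0 <= y /\ z = Phi i 1%nat y).
  destruct n as [|n']. intros; lia.
  destruct (completeness Es) as [S1 [Hub Hlub]].
  { exists U. intros z [i [y [Hi [Hy ->]]]]. apply Hd; auto. }
  { exists (Phi 0%nat 1%nat 0). exists 0%nat, 0. repeat split; auto; [lia|lra]. }
  set (n := S n') in *.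
  set (S1p := Rmax S1 0).
  assert (H0 : forall i y, (i < n)%nat -> 0 <= y -> Phi i 0%nat y <= S1p).
  { intros i y Hi Hy. eapply Rle_trans; [apply Ha; auto|].
    assert (fsum n (fun j => P1 j i * Phi j 1%nat y) <= S1).
    { apply Rle_trans with (fsum n (fun j => P1 j i * S1)).
      apply fsum_le. intros j Hj. apply Rmult_le_compat_l; [apply HP0; auto|].
      apply Hub. exists j, y; auto.
      rewrite fsum_scal_r, HP1; auto. lra. }
    specialize (He i Hi). unfold S1p.
    destruct (Rle_lt_dec 0 S1).
    - rewrite Rmax_left by lra. nra.
    - rewrite Rmax_right by lra. nra. }
  assert (HS : forall t i y, (t <= D)%nat -> (i < n)%nat -> 0 <= y ->
              Phi i t y <= (1 - INR t / INR D) * S1p + (INR t / INR D) * q).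
  { intros t i y Ht Hi Hy. eapply Rle_trans; [apply Hb; auto|].
    assert (Hs0 : 0 <= INR t / INR D) by (apply Rdiv_le_0_compat; [apply pos_INR|lra]).
    assert (Hs1 : INR t / INR D <= 1).
    { apply Rmult_le_reg_r with (INR D); auto. unfold Rdiv. rewrite Rmult_assoc, Rinv_l by lra.
      rewrite Rmult_1_r, Rmult_1_l. apply le_INR; auto. }
    apply Rplus_le_compat.
    - apply Rmult_le_compat_l; [lra|]. apply H0; auto. apply Rmult_le_pos; auto. apply pow_le; lra.
    - apply Rmult_le_compat_l; auto. apply Hc; auto. apply Rdiv_le_0_compat; auto. apply pow_lt; lra. }
  assert (HS1 : S1 < 0).
  { destruct (Rle_lt_dec 0 S1) as [Hp|Hp]; auto. exfalso.
    assert (S1 <= (1 - 1 / INR D) * S1 + (1 / INR D) * q).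
    { apply Hlub. intros z [i [y [Hi [Hy ->]]]].
      assert (Hh := HS 1%nat i y ltac:(lia) Hi Hy). simpl INR in Hh. unfold S1p in Hh.
      rewrite Rmax_left in Hh by lra. exact Hh. }
    assert (S1 * (1 / INR D) <= q * (1 / INR D)) by lra.
    assert (0 < 1 / INR D) by (apply Rdiv_lt_0_compat; lra).
    assert (S1 <= q) by (apply Rmult_le_reg_r with (1 / INR D); auto). lra. }
  intros i y t Hi Hy Ht. eapply Rle_trans; [apply HS; auto; lia|].
  unfold S1p. rewrite Rmax_right by lra.
  assert (1 <= INR t) by (apply (le_INR 1); lia).
  assert (q * INR t <= q) by nra.
  replace ((1 - INR t / INR D) * 0 + INR t / INR D * q) with (q * INR t / INR D) by (field; lra).
  unfold Rdiv. apply Rmult_le_compat_r; [apply Rlt_le, Rinv_0_lt_compat; lra| lra].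
Qed.

Lemma P1E_entry n P1 e i j : (j < n)%nat -> P1E n P1 e i j = P1 i j * e j.
Proof.
  intros Hj. unfold P1E, mmul, mdiag.
  rewrite (fsum_ext n _ (fun k => (P1 i k * e k) * (if Nat.eqb k j then 1 else 0))).
  apply (fsum_delta_r n j (fun k => P1 i k * e k)); auto.
  intros k _. destruct (Nat.eqb k j); ring.
Qed.

Definition Rs n (N : mat) (x : R) : mat := fun i j => Series (fun k => x ^ k * mpow n N k i j).

Lemma resolvent_row n N x i j : (i < n)%nat -> (j < n)%nat -> Conv n N x ->
  Rs n N x i j = mid i j + x * fsum n (fun l => Rs n N x i l * N l j).
Proof.
  intros Hi Hj Hc. unfold Rs. rewrite Series_incr_1 by (apply Hc; auto).
  simpl (x ^ 0). rewrite Rmult_1_l. simpl (mpow n N 0). f_equal.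
  rewrite (Series_ext _ (fun k => fsum n (fun l => x * ((x ^ k * mpow n N k i l) * N l j)))).
  2:{ intros k. rewrite mpow_S_r by auto. unfold mmul. simpl pow. rewrite <- fsum_scal. apply fsum_ext. intros; ring. }
  rewrite Series_fsum.
  2:{ intros l Hl. apply ex_series_scal_l'. apply ex_series_scal_r. apply Hc; auto. }
  rewrite <- fsum_scal. apply fsum_ext. intros l Hl. rewrite Series_scal_l, Series_scal_r. ring.
Qed.

Lemma Rs_inverse n N x : Conv n N x -> is_inverse n (msub mid (mscale x N)) (Rs n N x).
Proof.
  intros Hc i j Hi Hj. split.
  - unfold mmul, msub, mscale.
    rewrite (fsum_ext n _ (fun l => mid i l * Rs n N x l j - x * (N i l * Rs n N x l j))) by (intros; ring).
    rewrite fsum_minus, fsum_scal. unfold mid at 1. rewrite (fsum_delta n i (fun l => Rs n N x l j) Hi).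
    unfold Rs. rewrite resolvent_col by auto. fold (Rs n N x). ring.
  - unfold mmul, msub, mscale.
    rewrite (fsum_ext n _ (fun l => Rs n N x i l * mid l j - x * (Rs n N x i l * N l j))) by (intros; ring).
    rewrite fsum_minus, fsum_scal. unfold mid at 1. rewrite (fsum_delta_r n j (fun l => Rs n N x i l) Hj).
    rewrite resolvent_row by auto. ring.
Qed.

Lemma inverse_unique n M X Y : is_inverse n M X -> is_inverse n M Y ->
  forall i j, (i < n)%nat -> (j < n)%nat -> X i j = Y i j.
Proof.
  intros HX HY i j Hi Hj.
  rewrite <- (mmul_mid_r n X i j Hj).
  rewrite (mmul_ext n X X mid (mmul n M Y) i j); auto.
  2:{ intros k Hk. symmetry. apply HY; auto. }
  rewrite <- mmul_assoc.
  rewrite (mmul_ext n (mmul n X M) mid Y Y i j); auto.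
  2:{ intros k Hk. apply HX; auto. }
  apply mmul_mid_l; auto.
Qed.

Lemma mat_inv_Rs n N x : Conv n N x -> forall i j, (i < n)%nat -> (j < n)%nat ->
  mat_inv n (msub mid (mscale x N)) i j = Rs n N x i j.
Proof.
  intros Hc. apply inverse_unique with (msub mid (mscale x N)).
  - unfold mat_inv. apply epsilon_spec. exists (Rs n N x). apply Rs_inverse; auto.
  - apply Rs_inverse; auto.
Qed.

Definition rk n (N : mat) (e : nat -> R) (k i : nat) : R := fsum n (fun l => (1 - e l) * mpow n N k l i).

Lemma Zrow_eq n P1 e th x i : (i < n)%nat -> Conv n (P1E n P1 e) x ->
  ex_series (fun k => x ^ k * rk n (P1E n P1 e) e k i) /\
  Zrow n P1 e th x i = x ^ th * Series (fun k => x ^ k * rk n (P1E n P1 e) e k i).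
Proof.
  intros Hi Hc. set (N := P1E n P1 e) in *. unfold rk.
  assert (Hex : forall l, (l < n)%nat -> ex_series (fun k => (1 - e l) * (x ^ k * mpow n N k l i))).
  { intros l Hl. apply ex_series_scal_l'. apply Hc; auto. }
  split.
  - eapply ex_series_ext; [|apply (ex_series_fsum n _ Hex)]. intros k. simpl.
    rewrite <- fsum_scal. apply fsum_ext. intros; ring.
  - unfold Zrow. f_equal. fold N.
    rewrite (Series_ext _ (fun k => fsum n (fun l => (1 - e l) * (x ^ k * mpow n N k l i)))).
    2:{ intros k. rewrite <- fsum_scal. apply fsum_ext. intros; ring. }
    rewrite Series_fsum by auto. apply fsum_ext. intros l Hl.
    rewrite Series_scal_l. rewrite mat_inv_Rs by auto. auto.
Qed.

Lemma ex_series_Rplus (a b : nat -> R) : ex_series a -> ex_series b -> ex_series (fun k => a k + b k).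
Proof. intros Ha Hb. exact (ex_series_plus a b Ha Hb). Qed.

Lemma ex_series_Rminus (a b : nat -> R) : ex_series a -> ex_series b -> ex_series (fun k => a k - b k).
Proof. intros Ha Hb. exact (ex_series_minus a b Ha Hb). Qed.

Lemma col_stoch_mid n : col_stochastic n mid.
Proof.
  split. intros; apply mid_nonneg.
  intros j Hj. rewrite (fsum_ext n _ (fun i => 1 * (if Nat.eqb i j then 1 else 0))).
  apply (fsum_delta_r n j (fun _ => 1)); auto. intros; unfold mid; ring.
Qed.

Lemma col_stoch_mmul n A B : col_stochastic n A -> col_stochastic n B -> col_stochastic n (mmul n A B).
Proof.
  intros [HA0 HA1] [HB0 HB1]. split.
  - intros i j Hi Hj. apply mmul_nonneg; intros; [apply HA0| apply HB0]; auto.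
  - intros j Hj. unfold mmul. rewrite fsum_swap.
    rewrite (fsum_ext n _ (fun k => B k j)). apply HB1; auto.
    intros k Hk. rewrite fsum_scal_r, HA1; auto. ring.
Qed.

Lemma col_stoch_mpow n A k : col_stochastic n A -> col_stochastic n (mpow n A k).
Proof. intros H. induction k; simpl. apply col_stoch_mid. apply col_stoch_mmul; auto. Qed.

Lemma rk_nonneg n N e k i : nonneg_mat n N -> (forall l, (l < n)%nat -> 0 <= e l <= 1) -> (i < n)%nat ->
  0 <= rk n N e k i.
Proof.
  intros HN He Hi. unfold rk. apply fsum_nonneg. intros l Hl. apply Rmult_le_pos.
  specialize (He l Hl); lra. apply mpow_nonneg; auto.
Qed.

Lemma rk_0 n N e i : (i < n)%nat -> rk n N e 0 i = 1 - e i.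
Proof. intros Hi. unfold rk. simpl. unfold mid. apply (fsum_delta_r n i (fun l => 1 - e l)); auto. Qed.

Lemma rk_S n P1 e k i : (i < n)%nat ->
  rk n (P1E n P1 e) e (S k) i = e i * fsum n (fun j => P1 j i * rk n (P1E n P1 e) e k j).
Proof.
  intros Hi. unfold rk.
  rewrite (fsum_ext n _ (fun l => fsum n (fun j => (1 - e l) * mpow n (P1E n P1 e) k l j * (P1 j i * e i)))).
  2:{ intros l Hl. rewrite mpow_S_r by auto. unfold mmul. rewrite <- fsum_scal. apply fsum_ext.
      intros j Hj. rewrite P1E_entry by auto. ring. }
  rewrite fsum_swap. rewrite <- fsum_scal. apply fsum_ext. intros j Hj.
  rewrite <- fsum_scal, <- fsum_scal. apply fsum_ext. intros; ring.
Qed.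

Lemma ex_series_le_R (a b : nat -> R) : (forall k, Rabs (a k) <= b k) -> ex_series b -> ex_series a.
Proof. intros H Hb. apply (@ex_series_le R_AbsRing R_CompleteNormedModule a b); auto. Qed.

Definition Fterm (b C A B Mb : R) (D k : nat) : R :=
  B * (b ^ (D + k) / C ^ D - C ^ k) + Mb * (A ^ (D + k) - 1).

Lemma exists_q n (f : nat -> R) : (forall i, (i < n)%nat -> f i < 0) ->
  exists q, q < 0 /\ forall i, (i < n)%nat -> f i <= q.
Proof.
  induction n; intros H. exists (-1). split; [lra| intros; lia].
  destruct IHn as [q [Hq Hq']]. intros; apply H; lia.
  exists (Rmax q (f n)). split. apply Rmax_lub_lt; auto.
  intros i Hi. destruct (Nat.eq_dec i n) as [->|]. apply Rmax_r.
  eapply Rle_trans; [apply Hq'; lia| apply Rmax_l].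
Qed.

Lemma main_core n (P0 P1 : mat) (e : nat -> R) (b C A B Mb : R) (D : nat) :
  0 < b -> b < C -> C < 1 -> 1 < A -> 0 < B -> 0 < Mb ->
  col_stochastic n P0 -> col_stochastic n P1 ->
  (forall i, (i < n)%nat -> 0 <= e i <= 1) -> (0 < n)%nat ->
  Conv n (P1E n P1 e) A ->
  (forall i, (i < n)%nat -> Series (fun k => rk n (P1E n P1 e) e k i * Fterm b C A B Mb D k) < 0) ->
  forall th, (1 <= th <= D)%nat -> forall y, 0 <= y -> forall g, (g < n)%nat ->
  exists J, is_series (fun k => Hp b C A B Mb (th + k) y *
     fsum n (fun i => (1 - e i) * mmul n (mpow n (P1E n P1 e) k) (mmul n (mpow n P0 (th - 1)) P1) i g)) J
   /\ J < 0.
Proof.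
  intros Hb HbC HC1 HA HB HMb HP0 HP1 He Hn HcA HQ th Hth y Hy g Hg.
  set (N := P1E n P1 e) in *.
  assert (HN : nonneg_mat n N).
  { intros i j Hi Hj. unfold N. rewrite P1E_entry by auto. apply Rmult_le_pos.
    apply HP1; auto. apply He; auto. }
  assert (Hrk : forall k i, (i < n)%nat -> 0 <= rk n N e k i) by (intros; apply rk_nonneg; auto).
  assert (HexA : forall i, (i < n)%nat -> ex_series (fun k => A ^ k * rk n N e k i)).
  { intros i Hi. apply (proj1 (Zrow_eq n P1 e 0 A i Hi HcA)). }
  assert (HexH : forall i t z, (i < n)%nat -> 0 <= z -> ex_series (fun k => rk n N e k i * Hp b C A B Mb (t + k) z)).
  { intros i t z Hi Hz. apply (ex_series_le_R _ (fun k => ((2 * z + 2 * Mb + B) * A ^ t) * (A ^ k * rk n N e k i)))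
      ; [| apply ex_series_scal_l'; auto].
    intros k. rewrite Rabs_mult, Rabs_pos_eq by auto.
    assert (Habs := Hp_abs b C A B Mb (t + k) z Hb ltac:(lra) ltac:(lra) ltac:(lra) ltac:(lra) ltac:(lra) Hz).
    rewrite pow_add in Habs.
    replace ((2 * z + 2 * Mb + B) * A ^ t * (A ^ k * rk n N e k i)) with (rk n N e k i * ((2 * z + 2 * Mb + B) * (A ^ t * A ^ k))) by ring.
    apply Rmult_le_compat_l; auto. }
  set (Phi := fun i t z => Series (fun k => rk n N e k i * Hp b C A B Mb (t + k) z)).
  destruct (exists_q n _ HQ) as [q [Hq Hqi]].
  set (U := fsum n (fun i => Series (fun k => (Mb * A) * (A ^ k * rk n N e k i)))).
  assert (HD : (0 < D)%nat) by lia.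
  assert (HDR : 0 < INR D) by (apply lt_0_INR; lia).
  assert (HC0 : 0 < C) by lra.
  assert (Ha : forall i z, (i < n)%nat -> 0 <= z -> Phi i 0%nat z <= e i * fsum n (fun j => P1 j i * Phi j 1%nat z)).
  { intros i z Hi Hz. unfold Phi. rewrite Series_incr_1 by (apply HexH; auto).
    rewrite rk_0 by auto. simpl (0 + 0)%nat.
    assert ((1 - e i) * Hp b C A B Mb 0 z <= 0).
    { assert (H0 := Hp_0 b C A B Mb z). specialize (He i Hi). nra. }
    rewrite (Series_ext _ (fun k => e i * fsum n (fun j => P1 j i * (rk n N e k j * Hp b C A B Mb (1 + k) z)))).
    2:{ intros k. unfold N. rewrite rk_S by auto. fold N. simpl (0 + S k)%nat. simpl (1 + k)%nat.
        rewrite <- !fsum_scal, <- fsum_scal_r. apply fsum_ext. intros; ring. }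
    rewrite Series_scal_l, Series_fsum.
    2:{ intros j Hj. apply ex_series_scal_l'. apply HexH; auto. }
    rewrite (fsum_ext n (fun l => Series (fun k => P1 l i * (rk n N e k l * Hp b C A B Mb (1 + k) z)))
                       (fun j => P1 j i * Series (fun k => rk n N e k j * Hp b C A B Mb (1 + k) z))).
    2:{ intros; apply Series_scal_l. }
    lra. }
  assert (Hbc : forall i z t, (i < n)%nat -> 0 <= z -> (t <= D)%nat ->
     Phi i t z <= (1 - INR t / INR D) * Phi i 0%nat (C ^ t * z) + (INR t / INR D) * Phi i D (z / C ^ (D - t))).
  { intros i z t Hi Hz Ht. unfold Phi.
    assert (Hz1 : 0 <= C ^ t * z) by (apply Rmult_le_pos; auto; apply pow_le; lra).
    assert (Hz2 : 0 <= z / C ^ (D - t)) by (apply Rdiv_le_0_compat; auto; apply pow_lt; lra).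
    rewrite <- Series_scal_l, <- Series_scal_l, <- Series_plus.
    2:{ apply ex_series_scal_l'. apply HexH; auto. }
    2:{ apply ex_series_scal_l'. apply HexH; auto. }
    apply Series_le_gen. apply HexH; auto.
    apply ex_series_Rplus; apply ex_series_scal_l'; apply HexH; auto.
    intros k. simpl (0 + k)%nat.
    assert (Hcv := Hp_convex b C A B Mb t D k z Hb HbC ltac:(lra) ltac:(lra) Hz Ht HD).
    assert (Hr := Hrk k i Hi).
    apply Rle_trans with (rk n N e k i * ((1 - INR t / INR D) * Hp b C A B Mb k (C ^ t * z) +
       INR t / INR D * Hp b C A B Mb (D + k) (z / C ^ (D - t)))).
    apply Rmult_le_compat_l; auto. right; ring. }
  assert (HexF : forall i, (i < n)%nat -> ex_series (fun k => rk n N e k i * Fterm b C A B Mb D k)).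
  { intros i Hi.
    assert (HCD : 0 < C ^ D) by (apply pow_lt; lra).
    apply (ex_series_le_R _ (fun k => (B / C ^ D + B + Mb * A ^ D + Mb) * (A ^ k * rk n N e k i)));
      [|apply ex_series_scal_l'; auto].
    intros k. rewrite Rabs_mult, Rabs_pos_eq by auto. unfold Fterm.
    assert (H1 : 0 <= b ^ (D + k) <= 1) by (split; [apply pow_le; lra| apply pow_le1; lra]).
    assert (H2 : 0 <= C ^ k <= 1) by (split; [apply pow_le; lra| apply pow_le1; lra]).
    assert (H3 : 1 <= A ^ k) by (apply pow_R1_Rle; lra).
    assert (H4 : 1 <= A ^ D) by (apply pow_R1_Rle; lra).
    assert (H5 : 0 <= b ^ (D + k) / C ^ D <= / C ^ D).
    { split. apply Rdiv_le_0_compat; lra. unfold Rdiv. rewrite <- (Rmult_1_l (/ C ^ D)) at 2.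
      apply Rmult_le_compat_r; [apply Rlt_le, Rinv_0_lt_compat; lra| lra]. }
    replace ((B / C ^ D + B + Mb * A ^ D + Mb) * (A ^ k * rk n N e k i)) with
       (rk n N e k i * ((B / C ^ D + B + Mb * A ^ D + Mb) * A ^ k)) by ring.
    apply Rmult_le_compat_l; auto. rewrite (pow_add A D k).
    apply Rabs_le. assert (HI : 0 < / C ^ D) by (apply Rinv_0_lt_compat; lra).
    replace (B / C ^ D) with (B * / C ^ D) by reflexivity.
    set (X := b ^ (D + k) / C ^ D) in *. set (I := / C ^ D) in *.
    assert (I <= I * A ^ k) by nra.
    assert (0 <= B * X <= B * (I * A ^ k)).
    { split. apply Rmult_le_pos; lra. apply Rmult_le_compat_l; lra. }
    assert (0 <= B * C ^ k <= B * A ^ k).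
    { split. apply Rmult_le_pos; lra. apply Rmult_le_compat_l; lra. }
    assert (HMD : 0 <= Mb * A ^ D) by (apply Rmult_le_pos; lra).
    assert (Mb * A ^ D <= Mb * A ^ D * A ^ k).
    { rewrite <- (Rmult_1_r (Mb * A ^ D)) at 1. apply Rmult_le_compat_l; lra. }
    assert (Mb <= Mb * A ^ k).
    { rewrite <- (Rmult_1_r Mb) at 1. apply Rmult_le_compat_l; lra. }
    assert (0 <= Mb * (A ^ D * A ^ k)) by (apply Rmult_le_pos; [lra| apply Rmult_le_pos; lra]).
    split; nra. }
  assert (Hcq : forall i z, (i < n)%nat -> 0 <= z -> Phi i D z <= q).
  { intros i z Hi Hz. eapply Rle_trans; [|apply (Hqi i Hi)].
    cbv beta. unfold Phi.
    apply Series_le_gen. apply HexH; auto. apply HexF; auto.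
    intros k. apply Rmult_le_compat_l; auto. unfold Fterm.
    apply Hp_le_F; auto; lra. }
  assert (Hdu : forall i z, (i < n)%nat -> 0 <= z -> Phi i 1%nat z <= U).
  { intros i z Hi Hz. apply Rle_trans with (Series (fun k => (Mb * A) * (A ^ k * rk n N e k i))).
    - apply Series_le_gen. apply HexH; auto. apply ex_series_scal_l'; auto.
      intros k. assert (Hh := Hp_le_MA b C A B Mb (1 + k) z Hb ltac:(lra) ltac:(lra) ltac:(lra) Hz).
      simpl pow in Hh. simpl (1 + k)%nat in *.
      replace (Mb * A * (A ^ k * rk n N e k i)) with (rk n N e k i * (Mb * (A * A ^ k))) by ring.
      apply Rmult_le_compat_l; auto.
    - unfold U. apply (fsum_ge_term n (fun i => Series (fun k => (Mb * A) * (A ^ k * rk n N e k i)))); auto.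
      intros l Hl. eapply Rle_trans; [|apply (Series_ge_fsum _ 0)]. simpl; lra.
      apply ex_series_scal_l'; auto.
      intros k. apply Rmult_le_pos. nra. apply Rmult_le_pos; [apply pow_le; lra| auto]. }
  assert (Hfin := abstract_arg n Phi P1 e C q U D HD HC0 Hq He HP1 Ha Hbc Hcq Hdu).
  set (V := mmul n (mpow n P0 (th - 1)) P1).
  assert (HV : col_stochastic n V) by (apply col_stoch_mmul; [apply col_stoch_mpow|]; auto).
  destruct HV as [HV0 HV1].
  exists (fsum n (fun l => V l g * Phi l th y)).
  split.
  - assert (Hex2 : ex_series (fun k => fsum n (fun l => V l g * (rk n N e k l * Hp b C A B Mb (th + k) y)))).
    { apply ex_series_fsum. intros l Hl. apply ex_series_scal_l'. apply (HexH l th y); auto. }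
    assert (Hval : Series (fun k => fsum n (fun l => V l g * (rk n N e k l * Hp b C A B Mb (th + k) y)))
                   = fsum n (fun l => V l g * Phi l th y)).
    { rewrite Series_fsum.
      2:{ intros l Hl. apply ex_series_scal_l'. apply (HexH l th y); auto. }
      apply fsum_ext. intros l Hl. rewrite Series_scal_l. auto. }
    rewrite <- Hval. eapply is_series_ext; [|exact (Series_correct _ Hex2)].
    intros k.
    rewrite (fsum_ext n (fun i => (1 - e i) * mmul n (mpow n N k) V i g)
               (fun i => fsum n (fun l => (1 - e i) * mpow n N k i l * V l g))).
    2:{ intros i Hi. unfold mmul. rewrite <- fsum_scal. apply fsum_ext. intros; ring. }
    rewrite fsum_swap. rewrite <- fsum_scal. apply fsum_ext. intros l Hl.
    unfold rk. rewrite <- fsum_scal_r, <- fsum_scal. rewrite <- fsum_scal. apply fsum_ext. intros; ring.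
  - apply Rle_lt_trans with (fsum n (fun l => V l g * (q / INR D))).
    + apply fsum_le. intros l Hl. apply Rmult_le_compat_l. apply HV0; auto.
      apply Hfin; auto.
    + rewrite fsum_scal_r, HV1 by auto. rewrite Rmult_1_l.
      unfold Rdiv. assert (0 < / INR D) by (apply Rinv_0_lt_compat; lra). nra.
Qed.

Lemma Qrow_series n a abar c B Mb P1 e D i : (i < n)%nat ->
  0 < abar ^ 2 -> abar ^ 2 < c ^ 2 -> c ^ 2 < 1 -> 1 < a ^ 2 ->
  Conv n (P1E n P1 e) (a ^ 2) -> nonneg_mat n (P1E n P1 e) ->
  Qrow n a abar c B Mb P1 e D i =
  Series (fun k => rk n (P1E n P1 e) e k i * Fterm (abar ^ 2) (c ^ 2) (a ^ 2) B Mb D k).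
Proof.
  intros Hi Hb HbC HC1 HA HcA HN.
  set (N := P1E n P1 e) in *.
  set (b := abar ^ 2) in *. set (C := c ^ 2) in *. set (A := a ^ 2) in *.
  assert (Cv : forall x, 0 <= x <= A -> Conv n N x) by (intros; apply (Conv_mono n N x A); auto).
  assert (Z : forall x, 0 <= x <= A -> ex_series (fun k => x ^ k * rk n N e k i) /\
              Zrow n P1 e D x i = x ^ D * Series (fun k => x ^ k * rk n N e k i)).
  { intros x Hx. apply Zrow_eq; auto. }
  destruct (Z b ltac:(lra)) as [Eb Zb]. destruct (Z C ltac:(lra)) as [EC ZC].
  destruct (Z A ltac:(lra)) as [EA ZA]. destruct (Z 1 ltac:(lra)) as [E1 Z1].
  assert (HCD : 0 < C ^ D) by (apply pow_lt; lra).
  unfold Qrow. fold b C A. rewrite Zb, ZC, ZA, Z1.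
  replace (c ^ (2 * D)) with (C ^ D) by (unfold C; rewrite pow_mult; auto).
  rewrite (Series_ext (fun k => rk n N e k i * Fterm b C A B Mb D k) (fun k => ((B * b ^ D / C ^ D) * (b ^ k * rk n N e k i) - B * (C ^ k * rk n N e k i))
                              + ((Mb * A ^ D) * (A ^ k * rk n N e k i) - Mb * (1 ^ k * rk n N e k i)))).
  2:{ intros k. unfold Fterm. rewrite !pow_add, pow1. field. lra. }
  rewrite Series_plus, !Series_minus, !Series_scal_l.
  rewrite pow1. field. lra.
  all: try (apply ex_series_scal_l'; auto).
  all: try (apply ex_series_Rminus; apply ex_series_scal_l'; auto).
Qed.

Theorem mainTheorem5
  (a L c M B : R) (n : nat) (P0 P1 : mat) (e : nat -> R)
  (Ha : 1 < Rabs a)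
  (Habar : 0 < (a + L) ^ 2 < 1)
  (Hc : (a + L) ^ 2 < c ^ 2 < 1)
  (HM : 0 < M) (HB : 0 < B)
  (HP0 : col_stochastic n P0) (HP1 : col_stochastic n P1)
  (He : forall i, (i < n)%nat -> 0 <= e i <= 1)
  (Hrho : a ^ 2 * spectral_radius n (P1E n P1 e) < 1)
  (HB0 : B >= (M / (a ^ 2 - 1)) * ln (a ^ 2) / ln (c ^ 2 / (a + L) ^ 2))
  (D : nat)
  (HQ : forall i, (i < n)%nat ->
          Qrow n a (a + L) c B (M / (a ^ 2 - 1)) P1 e D i < 0) :
  forall (theta : nat), (1 <= theta <= D)%nat ->
  forall (x : R) (gamma : nat), (gamma < n)%nat ->
  exists J : R,
    infinite_sum
      (fun k => J_term n a (a + L) c B (M / (a ^ 2 - 1)) P0 P1 e theta (x ^ 2) gamma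
                  (theta + k)%nat) J
    /\ J < 0.
Proof.
  intros theta Hth x gamma Hg.
  assert (HA : 1 < a ^ 2).
  { rewrite <- (pow2_abs a). assert (0 <= Rabs a) by apply Rabs_pos. nra. }
  assert (HMb : 0 < M / (a ^ 2 - 1)) by (apply Rdiv_lt_0_compat; lra).
  assert (Hn : (0 < n)%nat) by lia.
  assert (HN : nonneg_mat n (P1E n P1 e)).
  { intros i j Hi Hj. rewrite P1E_entry by auto. apply Rmult_le_pos. apply HP1; auto. apply He; auto. }
  assert (HcA : Conv n (P1E n P1 e) (a ^ 2)) by (apply spec_conv; auto; lra).
  assert (HQ' : forall i, (i < n)%nat ->
     Series (fun k => rk n (P1E n P1 e) e k i * Fterm ((a + L) ^ 2) (c ^ 2) (a ^ 2) B (M / (a ^ 2 - 1)) D k) < 0).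
  { intros i Hi. rewrite <- Qrow_series; auto; lra. }
  destruct (main_core n P0 P1 e ((a + L) ^ 2) (c ^ 2) (a ^ 2) B (M / (a ^ 2 - 1)) D
              ltac:(lra) ltac:(lra) ltac:(lra) HA HB HMb HP0 HP1 He Hn HcA HQ' theta Hth (x ^ 2)
              ltac:(apply pow2_ge_0) gamma Hg) as [J [HJ HJ0]].
  exists J. split; auto. apply is_series_Reals.
  eapply is_series_ext; [|exact HJ]. intros k. unfold J_term. rewrite Hfun_Hp. replace (theta + k - theta)%nat with k by lia. auto.
Qed.
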